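(* Let $K$ be a finitely generated group and $G=\mathbb{Z}\wr K=W\rtimes K$ with $W=\bigoplus_K\mathbb{Z}$. Then: (1) Every finitely generated subgroup $H$ of $W$ is undistorted in $G$, i.e. $\mathrm{Dist}^G_H(n)\simeq n$. (2) If $H$ is a finitely generated subgroup of $K$, then $\mathrm{Dist}^G_H\simeq\mathrm{Dist}^K_H$. In particular $\mathrm{Dist}^G_K(n)\simeq n$. (3) If $\hat H\cong\mathbb{Z}$ is a subgroup of $G$ with $\mathrm{Dist}^G_{\hat H}(n)\not\simeq n$, then there exists a subgroup $H\cong\mathbb{Z}$ of $G$ which is either contained in $W$ or contained in $K$ such that $\mathrm{Dist}^G_H\simeq\mathrm{Dist}^G_{\hat H}$.
   Context: Wreath products: for groups $L,K$, $L\wr K=W\rtimes K$ with $W=\bigoplus_{K}L$. Elements are pairs $(f,k)$ with $f:K\to L$ finitely supported and $k\in K$, with multiplication $(f,k)(\hat f,\hat k)=(f+\hat f^{k},k\hat k)$, where $\hat f^{k}(v)=\hat f(vk^{-1})$. $K$ is identified with $\{(0,k)\}$ and $L$ with the summand of $W$ indexed by $e\in K$; $G$ is generated by a generator of $\mathbb{Z}$ together with a finite generating set of $K$. Distortion: if $G$ has finite generating set $S$ and a subgroup $H$ has finite generating set $T$, $\mathrm{Dist}^G_H(n)=\max\{|g|_T : g\in H,\ |g|_S\le n\}$, where $|g|_S$ is the length of a shortest word on $S^{\pm1}$ representing $g$. For $f,g:\mathbb{N}\to\mathbb{N}$, $f\preceq g$ means there is $C>0$ with $f(n)\le Cg(Cn+C)+Cn+C$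 for all $n$; $f\simeq g$ means $f\preceq g$ and $g\preceq f$. Undistorted means distortion $\simeq n$. *)

(* Defs.v *)
From Stdlib Require Import ZArith List ClassicalEpsilon.
Import ListNotations.
Set Implicit Arguments.

Record GOps := { gT :> Type; gmul : gT -> gT -> gT; ginv : gT -> gT; gone : gT }.

Record Grp := {
  gops :> GOps;
  mulA : forall x y z : gops, gmul gops x (gmul gops y z) = gmul gops (gmul gops x y) z;
  mul1g : forall x : gops, gmul gops (gone gops) x = x;
  mulg1 : forall x : gops, gmul gops x (gone gops) = x;
  mulVg : forall x : gops, gmul gops (ginv gops x) x = gone gops;
  mulgV : forall x : gops, gmul gops x (ginv gops x) = gone gops }.

(** Words: letters (b, s), b = true meaning s^{-1}. *)
Fixpoint eval_word (G : GOps) (w : list (bool * G)) : G :=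
  match w with
  | [] => gone G
  | (b, x) :: w' => gmul G (if b then ginv G x else x) (eval_word G w')
  end.

Definition word_over (G : GOps) (S : list G) (w : list (bool * G)) : Prop :=
  forall p, In p w -> In (snd p) S.

Definition word_length (G : GOps) (S : list G) (g : G) : nat :=
  epsilon (inhabits 0%nat) (fun n =>
    (exists w, word_over G S w /\ length w = n /\ eval_word G w = g) /\
    (forall w, word_over G S w -> eval_word G w = g -> (n <= length w)%nat)).

Definition is_subgroup (G : GOps) (H : G -> Prop) : Prop :=
  H (gone G) /\ (forall x y, H x -> H y -> H (gmul G x y)) /\
  (forall x, H x -> H (ginv G x)).

Definition generates (G : GOps) (T : list G) (H : G -> Prop) : Prop :=
  (forall t, In t T -> H t) /\
  (forall g, H g <-> exists w, word_over G T w /\ eval_word G w = g).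

Definition dist (G : GOps) (S : list G) (H : G -> Prop) (T : list G) (n : nat) : nat :=
  epsilon (inhabits 0%nat) (fun d =>
    (exists g, H g /\ (word_length G S g <= n)%nat /\ word_length G T g = d) /\
    (forall g, H g -> (word_length G S g <= n)%nat -> (word_length G T g <= d)%nat)).

Definition preceq (f g : nat -> nat) : Prop :=
  exists C : nat, (0 < C)%nat /\
    forall n, (f n <= C * g (C * n + C) + C * n + C)%nat.

Definition simeq (f g : nat -> nat) : Prop := preceq f g /\ preceq g f.

Definition iso_Z (G : GOps) (H : G -> Prop) : Prop :=
  exists phi : Z -> G,
    (forall a b, phi (a + b)%Z = gmul G (phi a) (phi b)) /\
    (forall a b, phi a = phi b -> a = b) /\
    (forall g, H g <-> exists n, phi n = g).

Section Wreath.
Variable K : Grp.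

Definition fin_supp (f : K -> Z) : Prop :=
  exists l : list K, forall v, f v <> 0%Z -> In v l.

Definition Wfun := { f : K -> Z | fin_supp f }.

Definition act (f : K -> Z) (k : K) : K -> Z := fun v => f (gmul K v (ginv K k)).

Lemma fin_supp_act f k : fin_supp f -> fin_supp (act f k).
Proof.
  intros [l Hl]. exists (map (fun u => gmul K u k) l). intros v Hv.
  apply in_map_iff. exists (gmul K v (ginv K k)). split.
  - rewrite <- mulA, mulVg, mulg1. reflexivity.
  - apply Hl. exact Hv.
Qed.

Lemma fin_supp_add f g : fin_supp f -> fin_supp g -> fin_supp (fun v => (f v + g v)%Z).
Proof.
  intros [l Hl] [m Hm]. exists (l ++ m). intros v Hv. apply in_or_app.
  destruct (Z.eq_dec (f v) 0) as [E|E].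
  - right. apply Hm. intro E'. apply Hv. rewrite E, E'. reflexivity.
  - left. apply Hl. exact E.
Qed.

Lemma fin_supp_opp f : fin_supp f -> fin_supp (fun v => (- f v)%Z).
Proof.
  intros [l Hl]. exists l. intros v Hv. apply Hl. intro E. apply Hv. rewrite E. reflexivity.
Qed.

Lemma fin_supp_zero : fin_supp (fun _ => 0%Z).
Proof. exists []. intros v Hv. exfalso. apply Hv. reflexivity. Qed.

Definition delta_e : K -> Z :=
  fun v => if excluded_middle_informative (v = gone K) then 1%Z else 0%Z.

Lemma fin_supp_delta : fin_supp delta_e.
Proof.
  exists [gone K]. intros v. unfold delta_e.
  destruct (excluded_middle_informative (v = gone K)) as [E|E].
  - intros _. left. symmetry. exact E.
  - intros H. exfalso. apply H. reflexivity.
Qed.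

Definition wr_carrier := (Wfun * K)%type.

Definition wr_mul (x y : wr_carrier) : wr_carrier :=
  (exist _ (fun v => (proj1_sig (fst x) v + act (proj1_sig (fst y)) (snd x) v)%Z)
     (fin_supp_add (proj2_sig (fst x)) (fin_supp_act (snd x) (proj2_sig (fst y)))),
   gmul K (snd x) (snd y)).

Definition wr_inv (x : wr_carrier) : wr_carrier :=
  (exist _ (fun v => (- act (proj1_sig (fst x)) (ginv K (snd x)) v)%Z)
     (fin_supp_opp (fin_supp_act (ginv K (snd x)) (proj2_sig (fst x)))),
   ginv K (snd x)).

Definition wr_one : wr_carrier := (exist _ (fun _ => 0%Z) fin_supp_zero, gone K).

Definition wreath : GOps := {| gT := wr_carrier; gmul := wr_mul; ginv := wr_inv; gone := wr_one |}.

Definition embK (k : K) : wreath := (exist _ (fun _ => 0%Z) fin_supp_zero, k).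

Definition wr_genZ : wreath := (exist _ delta_e fin_supp_delta, gone K).

Definition inW (g : wreath) : Prop := snd g = gone K.

Definition inK (g : wreath) : Prop := exists k, g = embK k.

Definition wr_gens (SK : list K) : list wreath := wr_genZ :: map embK SK.

End Wreath.

(* Main.v *)
Require Import Defs.
From Stdlib Require Import ZArith Znumtheory List Lia ClassicalEpsilon Classical FunctionalExtensionality ProofIrrelevance PropExtensionality.
Import ListNotations.
Set Implicit Arguments.

Lemma nat_min (P : nat -> Prop) : (exists n, P n) -> exists n, P n /\ forall m, P m -> (n <= m)%nat.
Proof.
  intros [n Hn]. revert Hn. induction n as [n IH] using (well_founded_induction lt_wf).
  intros Hn. destruct (classic (exists m, P m /\ (m < n)%nat)) as [[m [Pm Hm]]|N].
  - exact (IH m Hm Pm).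
  - exists n. split; auto. intros m Pm. destruct (Nat.lt_ge_cases m n); auto. exfalso; eauto.
Qed.

Lemma nat_max (P : nat -> Prop) B : (exists n, P n) -> (forall n, P n -> (n <= B)%nat) ->
  exists n, P n /\ forall m, P m -> (m <= n)%nat.
Proof.
  intros Hex HB.
  destruct (nat_min (fun d => forall m, P m -> (m <= d)%nat)) as [d [Hd Hm]].
  - exists B; auto.
  - exists d. split; auto. destruct (classic (P d)) as [Pd|NP]; auto. exfalso.
    destruct d as [|d].
    + destruct Hex as [n Pn]. assert (n = 0)%nat by (specialize (Hd n Pn); lia). subst; auto.
    + assert (forall m, P m -> (m <= d)%nat).
      { intros m Pm. specialize (Hd m Pm). destruct (Nat.eq_dec m (S d)); [subst; contradiction|lia]. }
      specialize (Hm d H). lia.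
Qed.

Definition reach (G : GOps) (S : list G) g := exists w, word_over G S w /\ eval_word G w = g.

Lemma wl_spec G S g : reach G S g ->
  (exists w, word_over G S w /\ length w = word_length G S g /\ eval_word G w = g) /\
  (forall w, word_over G S w -> eval_word G w = g -> (word_length G S g <= length w)%nat).
Proof.
  intros [w0 [H0 E0]]. unfold word_length. apply epsilon_spec.
  destruct (nat_min (fun n => exists w, word_over G S w /\ length w = n /\ eval_word G w = g))
    as [n [[w [A [B C]]] M]].
  - exists (length w0). eauto.
  - exists n. split; [eauto|]. intros w' Hw' Ew'. apply M. eauto.
Qed.

Lemma wl_le G S w : word_over G S w -> (word_length G S (eval_word G w) <= length w)%nat.
Proof. intros H. apply (wl_spec (G:=G) (S:=S) (g:=eval_word G w)); eauto. exists w; auto. Qed.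

Lemma wl_nil G S : word_length G S (gone G) = 0%nat.
Proof.
  assert (H := wl_le (G:=G) (S:=S) (w:=[])). simpl in H.
  assert (word_over G S []) by (intros p []). specialize (H H0). lia.
Qed.

Fixpoint words_exact (G : GOps) (Sg : list G) (n : nat) : list (list (bool * G)) :=
  match n with
  | O => [[]]
  | S n' => flat_map (fun w => flat_map (fun s => [(false, s) :: w; (true, s) :: w]) Sg) (words_exact G Sg n')
  end.

Lemma words_exact_in G Sg w : word_over G Sg w -> In w (words_exact G Sg (length w)).
Proof.
  induction w as [|[b s] w IH]; simpl; intros H; [auto|].
  apply in_flat_map. exists w. split.
  - apply IH. intros p Hp. apply H. right; auto.
  - apply in_flat_map. exists s. split. apply (H (b, s)); left; auto.
    destruct b; simpl; auto.
Qed.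

Definition words_upto G Sg n := flat_map (fun k => words_exact G Sg k) (seq 0 (S n)).

Lemma words_upto_in G Sg w n : word_over G Sg w -> (length w <= n)%nat -> In w (words_upto G Sg n).
Proof.
  intros H L. unfold words_upto. apply in_flat_map. exists (length w). split.
  apply in_seq. lia. apply words_exact_in; auto.
Qed.

Lemma le_list_max x l : In x l -> (x <= list_max l)%nat.
Proof.
  intros H. assert (A : (list_max l <= list_max l)%nat) by lia.
  apply list_max_le in A. rewrite Forall_forall in A. auto.
Qed.

Definition dist_P (G : GOps) (S : list G) (H : G -> Prop) (T : list G) (n d : nat) : Prop :=
  (exists g, H g /\ (word_length G S g <= n)%nat /\ word_length G T g = d) /\
  (forall g, H g -> (word_length G S g <= n)%nat -> (word_length G T g <= d)%nat).

Lemma dist_spec (G : GOps) (S : list G) (H : G -> Prop) (T : list G) n g0 : (forall g, H g -> reach G S g) -> H g0 ->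
  (word_length G S g0 <= n)%nat -> dist_P G S H T n (dist G S H T n).
Proof.
  intros HR H0 L0. unfold dist. apply epsilon_spec.
  destruct (nat_max (fun d => exists g, H g /\ (word_length G S g <= n)%nat /\ word_length G T g = d)
    (B := list_max (map (fun w => word_length G T (eval_word G w)) (words_upto G S n)))) as [d [Pd Md]].
  - eauto.
  - intros d [g [Hg [Lg Eg]]]. subst d.
    destruct (wl_spec (HR g Hg)) as [[w [Ow [Lw Ew]]] _].
    apply le_list_max. apply in_map_iff. exists w. split. congruence.
    apply words_upto_in; auto. lia.
  - exists d. split; auto. intros g Hg Lg. apply Md. eauto.
Qed.

Section GroupK.
Variable K : Grp.
Notation m := (gmul K).
Notation i := (ginv K).
Notation e := (gone K).

Lemma g_cancel_l a x y : m a x = m a y -> x = y.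
Proof. intros H. rewrite <- (mul1g K x), <- (mul1g K y), <- (mulVg K a), <- !mulA, H. auto. Qed.
Lemma g_cancel_r a x y : m x a = m y a -> x = y.
Proof. intros H. rewrite <- (mulg1 K x), <- (mulg1 K y), <- (mulgV K a), !mulA, H. auto. Qed.
Lemma inv_uniq x y : m x y = e -> y = i x.
Proof. intros H. apply (g_cancel_l x). rewrite H, mulgV. auto. Qed.
Lemma inv_inv x : i (i x) = x.
Proof. symmetry. apply inv_uniq. apply mulVg. Qed.
Lemma inv_e : i e = e.
Proof. symmetry. apply inv_uniq. apply mul1g. Qed.
Lemma inv_mul x y : i (m x y) = m (i y) (i x).
Proof. symmetry. apply inv_uniq. rewrite mulA, <- (mulA K x y), mulgV, mulg1, mulgV. auto. Qed.
Lemma mul_inv_l x y : m (i x) (m x y) = y.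
Proof. rewrite mulA, mulVg, mul1g; auto. Qed.
Lemma mul_inv_l' x y : m x (m (i x) y) = y.
Proof. rewrite mulA, mulgV, mul1g; auto. Qed.
Lemma mul_inv_r x y : m (m y x) (i x) = y.
Proof. rewrite <- mulA, mulgV, mulg1; auto. Qed.
Lemma mul_inv_r' x y : m (m y (i x)) x = y.
Proof. rewrite <- mulA, mulVg, mulg1; auto. Qed.

Lemma evalK_app w1 w2 : eval_word K (w1 ++ w2) = m (eval_word K w1) (eval_word K w2).
Proof.
  induction w1 as [|[b x] w1 IH]; simpl. rewrite mul1g; auto. rewrite IH, mulA; auto.
Qed.

Definition invw (w : list (bool * K)) := rev (map (fun p => (negb (fst p), snd p)) w).

Lemma invw_eval w : eval_word K (invw w) = i (eval_word K w).
Proof.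
  induction w as [|[b x] w IH]; simpl. rewrite inv_e; auto.
  unfold invw in *. simpl. rewrite evalK_app, IH, inv_mul. simpl. rewrite mulg1.
  destruct b; simpl; auto. rewrite inv_inv; auto.
Qed.

Lemma invw_len w : length (invw w) = length w.
Proof. unfold invw. rewrite length_rev, length_map. auto. Qed.

Lemma invw_over S w : word_over K S w -> word_over K S (invw w).
Proof.
  unfold invw. intros H p Hp. apply in_rev in Hp. apply in_map_iff in Hp.
  destruct Hp as [q [<- Hq]]. simpl. apply H; auto.
Qed.

Lemma over_app G S (w1 w2 : list (bool * gT G)) : word_over G S w1 -> word_over G S w2 -> word_over G S (w1 ++ w2).
Proof. intros A B p Hp. apply in_app_or in Hp. destruct Hp; auto. Qed.

Variable SK : list K.
Hypothesis hSK : generates K SK (fun _ => True).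

Lemma reachK x : reach K SK x.
Proof. destruct hSK as [_ H]. apply H. auto. Qed.

Definition wlK x := word_length K SK x.

Lemma wlK_word x : exists w, word_over K SK w /\ length w = wlK x /\ eval_word K w = x.
Proof. apply (wl_spec (reachK x)). Qed.

Lemma wlK_mul x y : (wlK (m x y) <= wlK x + wlK y)%nat.
Proof.
  destruct (wlK_word x) as [w1 [O1 [L1 E1]]]. destruct (wlK_word y) as [w2 [O2 [L2 E2]]].
  assert (H := wl_le (G:=K) (S:=SK) (w:=w1++w2) (over_app O1 O2)).
  rewrite evalK_app, E1, E2, length_app in H. unfold wlK in *. lia.
Qed.

Lemma wlK_inv x : (wlK (i x) <= wlK x)%nat.
Proof.
  destruct (wlK_word x) as [w1 [O1 [L1 E1]]].
  assert (H := wl_le (G:=K) (S:=SK) (invw_over O1)). rewrite invw_eval, invw_len, E1 in H.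
  unfold wlK in *. lia.
Qed.

Lemma wlK_inv_eq x : wlK (i x) = wlK x.
Proof. assert (H1 := wlK_inv x). assert (H2 := wlK_inv (i x)). rewrite inv_inv in H2. lia. Qed.

Lemma wlK_e : wlK e = 0%nat.
Proof. apply wl_nil. Qed.

End GroupK.
Arguments g_cancel_l {K}. Arguments g_cancel_r {K}. Arguments inv_uniq {K}. Arguments inv_inv {K}.
Arguments inv_e {K}. Arguments inv_mul {K}. Arguments mul_inv_l {K}. Arguments mul_inv_r {K}.
Arguments mul_inv_r' {K}. Arguments evalK_app {K}. Arguments invw {K}. Arguments invw_eval {K}.
Arguments invw_len {K}. Arguments invw_over {K}. Arguments reachK {K SK}. Arguments wlK {K}.
Arguments wlK_word {K SK}. Arguments wlK_mul {K SK}. Arguments wlK_inv {K SK}. Arguments wlK_inv_eq {K SK}. Arguments wlK_e {K}.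
Arguments mul_inv_l' {K}.

Section Magma.
Variable K : Grp.
Notation m := (gmul K).
Notation i := (ginv K).
Notation e := (gone K).
Notation G := (wreath K).
Notation gm := (gmul G).

Definition lamp (g : G) : K -> Z := proj1_sig (fst g).

Lemma wr_ext (x y : G) : (forall v, lamp x v = lamp y v) -> snd x = snd y -> x = y.
Proof.
  destruct x as [[f pf] k], y as [[g pg] k']. unfold lamp; simpl. intros H1 H2.
  assert (f = g) by (apply functional_extensionality; auto). subst.
  rewrite (proof_irrelevance _ pf pg). auto.
Qed.

Lemma lamp_mul (x y : G) v : lamp (gm x y) v = (lamp x v + lamp y (m v (i (snd x))))%Z.
Proof. reflexivity. Qed.
Lemma snd_mul (x y : G) : snd (gm x y) = m (snd x) (snd y).
Proof. reflexivity. Qed.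
Lemma lamp_inv (x : G) v : lamp (ginv G x) v = (- lamp x (m v (snd x)))%Z.
Proof. unfold lamp; simpl. unfold act. rewrite inv_inv. auto. Qed.
Lemma snd_inv (x : G) : snd (ginv G x) = i (snd x).
Proof. reflexivity. Qed.
Lemma lamp_one v : lamp (gone G) v = 0%Z.
Proof. reflexivity. Qed.
Lemma snd_one : snd (gone G) = e.
Proof. reflexivity. Qed.
Lemma lamp_embK k v : lamp (embK K k) v = 0%Z.
Proof. reflexivity. Qed.
Lemma lamp_genZ v : lamp (wr_genZ K) v = delta_e K v.
Proof. reflexivity. Qed.

Definition lv {G0 : GOps} (p : bool * G0) : G0 := if fst p then ginv G0 (snd p) else snd p.

Lemma eval_cons (G0 : GOps) p w : eval_word G0 (p :: w) = gmul G0 (lv p) (eval_word G0 w).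
Proof. destruct p; reflexivity. Qed.

Fixpoint rprod (w : list (bool * G)) : K :=
  match w with [] => e | p :: w' => m (rprod w') (snd (lv p)) end.

Lemma eval_app_lamp w1 w2 v :
  lamp (eval_word G (w1 ++ w2)) v = (lamp (eval_word G w1) v + lamp (eval_word G w2) (m v (i (rprod w1))))%Z.
Proof.
  revert v. induction w1 as [|p w1 IH]; intros v.
  - simpl. rewrite inv_e, mulg1. auto.
  - rewrite <- app_comm_cons. cbn [rprod]. rewrite !eval_cons, !lamp_mul, IH. rewrite inv_mul, mulA. lia.
Qed.

Lemma eval_app_snd w1 w2 :
  snd (eval_word G (w1 ++ w2)) = m (snd (eval_word G w1)) (snd (eval_word G w2)).
Proof.
  induction w1 as [|p w1 IH]. simpl. rewrite mul1g; auto.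
  rewrite <- app_comm_cons. rewrite !eval_cons, !snd_mul, IH, mulA. auto.
Qed.

Lemma gens_cases SK y : In y (wr_gens K SK) -> y = wr_genZ K \/ exists s, In s SK /\ y = embK K s.
Proof.
  simpl. intros [H|H]; auto. right. apply in_map_iff in H. destruct H as [s [<- Hs]]; eauto.
Qed.

Fixpoint sumZ (A : Type) (f : A -> Z) (l : list A) : Z :=
  match l with [] => 0%Z | a :: l' => (f a + sumZ f l')%Z end.
Fixpoint sumN (A : Type) (f : A -> nat) (l : list A) : nat :=
  match l with [] => 0%nat | a :: l' => (f a + sumN f l')%nat end.

Lemma sumZ_map (A B : Type) (f : B -> Z) (g : A -> B) l : sumZ f (map g l) = sumZ (fun a => f (g a)) l.
Proof. induction l; simpl; auto. rewrite IHl; auto. Qed.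
Lemma sumZ_le (A : Type) (f g : A -> Z) l : (forall a, In a l -> (f a <= g a)%Z) -> (sumZ f l <= sumZ g l)%Z.
Proof. induction l; simpl; intros H. lia. assert (H1 := H a (or_introl eq_refl)). assert (sumZ f l <= sumZ g l)%Z by (apply IHl; auto). lia. Qed.
Lemma sumZ_add (A : Type) (f g : A -> Z) l : sumZ (fun a => f a + g a)%Z l = (sumZ f l + sumZ g l)%Z.
Proof. induction l; simpl; lia. Qed.
Lemma sumN_le (A : Type) (f g : A -> nat) l : (forall a, In a l -> (f a <= g a)%nat) -> (sumN f l <= sumN g l)%nat.
Proof. induction l; simpl; intros H. lia. assert (H1 := H a (or_introl eq_refl)). assert (sumN f l <= sumN g l)%nat by (apply IHl; auto). lia. Qed.
Lemma sumZ_nonneg (A : Type) (f : A -> Z) l : (forall a, In a l -> (0 <= f a)%Z) -> (0 <= sumZ f l)%Z.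
Proof. induction l; simpl; intros H. lia. assert (H1 := H a (or_introl eq_refl)). assert (0 <= sumZ f l)%Z by (apply IHl; auto). lia. Qed.

Lemma NoDup_map_inj (A B : Type) (f : A -> B) l : (forall x y, f x = f y -> x = y) -> NoDup l -> NoDup (map f l).
Proof.
  intros Hf H. induction H; simpl; constructor; auto.
  intros Hin. apply in_map_iff in Hin. destruct Hin as [y [E Hy]]. apply Hf in E. subst. contradiction.
Qed.

Lemma delta_e_spec v : (v = e /\ delta_e K v = 1%Z) \/ (v <> e /\ delta_e K v = 0%Z).
Proof. unfold delta_e. destruct (excluded_middle_informative (v = e)); auto. Qed.

Lemma sum_delta_zero P : (forall q, In q P -> q <> e) -> sumZ (delta_e K) P = 0%Z.
Proof.
  induction P as [|p P IH]; simpl; intros H; auto. rewrite IH; auto.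
  destruct (delta_e_spec p) as [[A B]|[A B]]; [exfalso; apply (H p); auto|lia].
Qed.

Lemma sum_delta_le P : NoDup P -> (sumZ (delta_e K) P <= 1)%Z.
Proof.
  induction P as [|p P IH]; simpl; intros H. lia. inversion H; subst.
  destruct (delta_e_spec p) as [[A B]|[A B]].
  - subst. rewrite sum_delta_zero. lia. intros q Hq E. subst. contradiction.
  - rewrite B. specialize (IH H3). lia.
Qed.

Lemma delta_e_nonneg v : (0 <= delta_e K v)%Z.
Proof. destruct (delta_e_spec v) as [[_ B]|[_ B]]; lia. Qed.

Variable SK : list K.
Hypothesis hSK : generates K SK (fun _ => True).
Notation S := (wr_gens K SK).

Lemma letter_cases p : In (snd p) S ->
  (snd (lv p) = e /\ (forall v, lamp (lv p) v = if fst p then (- delta_e K v)%Z else delta_e K v)) \/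
  (exists s, In s SK /\ lamp (lv p) = (fun _ => 0%Z) /\ snd (lv p) = (if fst p then i s else s)).
Proof.
  destruct p as [b y]. simpl. intros H. apply gens_cases in H. destruct H as [->|[s [Hs ->]]].
  - left. split.
    + destruct b; cbn [lv fst snd]; [rewrite snd_inv; apply inv_e | reflexivity].
    + intros v. destruct b; cbn [lv fst snd]; [|apply lamp_genZ].
      rewrite lamp_inv, lamp_genZ. change (snd (wr_genZ K)) with e. rewrite mulg1. auto.
  - right. exists s. split; auto. split.
    + apply functional_extensionality; intros v. destruct b; cbn [lv fst snd]; [|reflexivity].
      rewrite lamp_inv. reflexivity.
    + destruct b; reflexivity.
Qed.

Lemma lower_bound w : word_over G S w -> forall P, NoDup P ->
  (sumZ (fun p => Z.abs (lamp (eval_word G w) p)) P <= Z.of_nat (length w))%Z.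
Proof.
  induction w as [|p w IH]; intros Hw P HP.
  - simpl. clear. induction P; cbn -[Z.add] in *; lia.
  - assert (Hp : In (snd p) S) by (apply (Hw p); left; auto).
    assert (Hw' : word_over G S w) by (intros q Hq; apply Hw; right; auto).
    cbn [length]. rewrite eval_cons, Nat2Z.inj_succ. destruct (letter_cases p Hp) as [[E L]|[s [Hs [L E]]]].
    + eapply Z.le_trans. apply sumZ_le with (g := fun q => (delta_e K q + Z.abs (lamp (eval_word G w) q))%Z).
      { intros q _. rewrite lamp_mul, L, E, inv_e, mulg1. assert (H0 := delta_e_nonneg q). destruct (fst p); lia. }
      rewrite sumZ_add. assert (H1 := sum_delta_le HP). assert (H2 := IH Hw' P HP). lia.
    + assert (Hm : NoDup (map (fun q => m q (i (snd (lv p)))) P)).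
      { apply NoDup_map_inj; auto. intros x y. apply g_cancel_r. }
      assert (H2 := IH Hw' _ Hm). rewrite sumZ_map in H2.
      eapply Z.le_trans; [|apply Z.le_le_succ_r; exact H2].
      apply sumZ_le. intros q _. rewrite lamp_mul, L. lia.
Qed.

Definition projK (w : list (bool * G)) : list (bool * K) :=
  flat_map (fun p => if excluded_middle_informative (snd (snd p) = e) then [] else [(fst p, snd (snd p))]) w.

Lemma projK_spec w : word_over G S w ->
  word_over K SK (projK w) /\ (length (projK w) <= length w)%nat /\ eval_word K (projK w) = snd (eval_word G w).
Proof.
  induction w as [|p w IH]; intros Hw.
  - simpl. split; [intros q []|]. split; auto.
  - assert (Hp : In (snd p) S) by (apply (Hw p); left; auto).
    assert (Hw' : word_over G S w) by (intros q Hq; apply Hw; right; auto).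
    destruct (IH Hw') as [O [L E]].
    unfold projK. cbn [flat_map]. fold (projK w). rewrite eval_cons, snd_mul.
    destruct p as [b y]. cbn [fst snd] in *.
    destruct (excluded_middle_informative (snd y = e)) as [Ey|Ey].
    + simpl app. split; auto. split. cbn [length app]; lia. rewrite E.
      assert (snd (lv (b, y)) = e) as ->. { destruct b; cbn [lv fst snd]; [rewrite snd_inv, Ey; apply inv_e| auto]. }
      rewrite mul1g; auto.
    + split. intros q [Hq|Hq]; [|apply O; auto]. subst q. simpl.
      apply gens_cases in Hp. destruct Hp as [->|[s [Hs ->]]]. exfalso; apply Ey; reflexivity. simpl; auto.
      split. cbn [length app]; lia. simpl app. rewrite eval_cons, E. f_equal. destruct b; reflexivity.
Qed.

Lemma wl_snd_le w : word_over G S w -> (wlK SK (snd (eval_word G w)) <= length w)%nat.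
Proof.
  intros H. destruct (projK_spec H) as [O [L E]]. rewrite <- E. unfold wlK.
  eapply Nat.le_trans. apply wl_le; auto. auto.
Qed.

Definition liftf (a : list (bool * K)) : list (bool * G) := map (fun p => (fst p, embK K (snd p))) a.

Lemma liftf_over a : word_over K SK a -> word_over G S (liftf a).
Proof.
  intros H p Hp. unfold liftf in Hp. apply in_map_iff in Hp. destruct Hp as [q [<- Hq]].
  simpl. right. apply in_map. apply (H q Hq).
Qed.
Lemma liftf_len a : length (liftf a) = length a.
Proof. unfold liftf. apply length_map. Qed.
Lemma liftf_lamp a v : lamp (eval_word G (liftf a)) v = 0%Z.
Proof.
  revert v. induction a as [|[b s] a IH]; intros v. reflexivity.
  unfold liftf; cbn [map]; fold (liftf a). rewrite eval_cons, lamp_mul, IH.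
  destruct b; cbn [lv fst snd]. rewrite lamp_inv. reflexivity. reflexivity.
Qed.
Lemma liftf_snd a : snd (eval_word G (liftf a)) = eval_word K a.
Proof.
  induction a as [|[b s] a IH]. reflexivity.
  unfold liftf; cbn [map]; fold (liftf a). rewrite eval_cons, snd_mul, IH, eval_cons.
  destruct b; reflexivity.
Qed.
Lemma liftf_rprod a : rprod (liftf a) = eval_word K (rev a).
Proof.
  induction a as [|[b s] a IH]. reflexivity.
  unfold liftf; cbn [map rprod]; fold (liftf a). rewrite IH. cbn [rev]. rewrite evalK_app.
  f_equal. simpl. rewrite mulg1. destruct b; reflexivity.
Qed.

Lemma over_rev (G0 : GOps) (S0 : list G0) w : word_over G0 S0 w -> word_over G0 S0 (rev w).
Proof. intros H p Hp. apply H. apply in_rev; auto. Qed.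

Definition zword (c : Z) : list (bool * G) := repeat ((c <? 0)%Z, wr_genZ K) (Z.abs_nat c).

Lemma zrep_lamp b n v : lamp (eval_word G (repeat (b, wr_genZ K) n)) v =
   ((if b then - Z.of_nat n else Z.of_nat n) * delta_e K v)%Z.
Proof.
  revert v; induction n as [|n IH]; intros v. change (lamp (eval_word G (repeat (b, wr_genZ K) 0)) v) with 0%Z. destruct b; simpl; lia.
  cbn [repeat]. rewrite eval_cons, lamp_mul, IH.
  assert (snd (lv (b, wr_genZ K)) = e) as ->. { destruct b; cbn [lv fst snd]; [rewrite snd_inv; apply inv_e| auto]. }
  rewrite inv_e, mulg1. destruct b; cbn [lv fst snd]; [rewrite lamp_inv, lamp_genZ; change (snd (wr_genZ K)) with e; rewrite mulg1|rewrite lamp_genZ]; lia.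
Qed.

Lemma zword_lamp c v : lamp (eval_word G (zword c)) v = (c * delta_e K v)%Z.
Proof.
  unfold zword. rewrite zrep_lamp. destruct (Z.ltb_spec c 0); f_equal; lia.
Qed.
Lemma zword_rprod c : rprod (zword c) = e.
Proof.
  unfold zword. induction (Z.abs_nat c) as [|n IH]. reflexivity. cbn [repeat rprod]. rewrite IH.
  destruct (c <? 0)%Z; cbn [lv fst snd]. rewrite snd_inv, mul1g. apply inv_e. apply mul1g.
Qed.
Lemma zword_over c : word_over G S (zword c).
Proof. intros p Hp. unfold zword in Hp. apply repeat_spec in Hp. subst p. left; auto. Qed.
Lemma zword_len c : length (zword c) = Z.abs_nat c.
Proof. apply repeat_length. Qed.

Lemma place (w : list (bool * G)) (u : K) (c : Z) : word_over G S w -> exists w', word_over G S w' /\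
  (length w' <= length w + 2 * wlK SK u + Z.abs_nat c)%nat /\
  forall v, lamp (eval_word G w') v = (lamp (eval_word G w) v + c * delta_e K (m v (i u)))%Z.
Proof.
  intros Hw. destruct (wlK_word hSK u) as [a [Oa [La Ea]]].
  destruct (wlK_word hSK (i u)) as [b [Ob [Lb Eb]]].
  exists (liftf (rev a) ++ (zword c ++ (liftf (rev b) ++ w))). split; [|split].
  - repeat apply over_app; auto using liftf_over, over_rev, zword_over.
  - rewrite !length_app, !liftf_len, !length_rev, zword_len, La, Lb. rewrite wlK_inv_eq; auto. lia.
  - intros v. rewrite !eval_app_lamp, liftf_lamp, zword_lamp, liftf_lamp, !liftf_rprod, zword_rprod, !rev_involutive, Ea, Eb.
    rewrite inv_e, mulg1, inv_inv, mul_inv_r'. lia.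
Qed.

Lemma build P : forall F : K -> Z, (forall v, F v <> 0%Z -> In v P) -> exists w, word_over G S w /\ (forall v, lamp (eval_word G w) v = F v) /\ (length w <= sumN (fun p => 2 * wlK SK p + Z.abs_nat (F p)) P)%nat.
Proof.
  induction P as [|p P IH]; intros F HF.
  - exists []. split. intros q []. split; [|simpl; lia].
    intros v. simpl. destruct (Z.eq_dec (F v) 0); auto. exfalso. apply (HF v); auto.
  - set (F' := fun v => if excluded_middle_informative (v = p) then 0%Z else F v).
    destruct (IH F') as [w0 [O0 [L0 B0]]].
    { intros v Hv. unfold F' in Hv. destruct (excluded_middle_informative (v = p)). lia.
      destruct (HF v Hv); auto. congruence. }
    destruct (place p (F p) O0) as [w [O [Lw Ew]]].
    exists w. split; auto. split.
    + intros v. rewrite Ew, L0. unfold F'. destruct (excluded_middle_informative (v = p)) as [->|N].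
      * rewrite mulgV. destruct (delta_e_spec e) as [[_ D]|[D _]]; [rewrite D; lia|congruence].
      * destruct (delta_e_spec (m v (i p))) as [[D _]|[_ D]]; [|rewrite D; lia].
        exfalso. apply N. apply (g_cancel_r (i p)). rewrite D, mulgV. auto.
    + cbn [sumN]. assert (sumN (fun p0 => 2 * wlK SK p0 + Z.abs_nat (F' p0)) P <= sumN (fun p0 => 2 * wlK SK p0 + Z.abs_nat (F p0)) P)%nat.
      { apply sumN_le. intros q _. unfold F'. destruct (excluded_middle_informative (q = p)); simpl; lia. }
      lia.
Qed.

Lemma wl_upper (g : G) P : (forall v, lamp g v <> 0%Z -> In v P) ->
  reach G S g /\ (word_length G S g <= 2 * sumN (fun p => 2 * wlK SK p + Z.abs_nat (lamp g p)) P + wlK SK (snd g))%nat.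
Proof.
  intros HP. destruct (build P (lamp g) HP) as [w [O [Lw Bw]]].
  set (k0 := snd (eval_word G w)).
  destruct (wlK_word hSK (m (i k0) (snd g))) as [a [Oa [La Ea]]].
  assert (E : eval_word G (w ++ liftf a) = g).
  { apply wr_ext. intros v. rewrite eval_app_lamp, liftf_lamp, Lw. lia.
    rewrite eval_app_snd, liftf_snd, Ea. apply mul_inv_l'. }
  assert (Ow : word_over G S (w ++ liftf a)) by (apply over_app; auto using liftf_over).
  split. exists (w ++ liftf a); auto.
  rewrite <- E at 1. eapply Nat.le_trans. apply wl_le; auto.
  rewrite length_app, liftf_len, La.
  assert (H1 := wlK_mul hSK (i k0) (snd g)). rewrite wlK_inv_eq in H1; auto.
  assert (H2 := wl_snd_le O). fold k0 in H2. lia.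
Qed.

Lemma reach_all (g : G) : reach G S g.
Proof.
  destruct (proj2_sig (fst g)) as [l Hl]. apply (proj1 (wl_upper g l Hl)).
Qed.

Lemma wl_lower (g : G) P : NoDup P -> (sumZ (fun p => Z.abs (lamp g p)) P <= Z.of_nat (word_length G S g))%Z.
Proof.
  intros HP. destruct (wl_spec (reach_all g)) as [[w [O [L E]]] _]. subst g. rewrite <- L.
  apply lower_bound; auto.
Qed.

Lemma wl_lower_K (g : G) : (wlK SK (snd g) <= word_length G S g)%nat.
Proof.
  destruct (wl_spec (reach_all g)) as [[w [O [L E]]] _]. rewrite <- L, <- E. apply wl_snd_le; auto.
Qed.

End Magma.

Lemma dist_mono (G : GOps) (S : list G) (H : G -> Prop) (T : list G) g0 :
  (forall g, H g -> reach G S g) -> H g0 -> word_length G S g0 = 0%nat ->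
  forall n n', (n <= n')%nat -> (dist G S H T n <= dist G S H T n')%nat.
Proof.
  intros HR H0 L0 n n' Le.
  destruct (@dist_spec G S H T n g0 HR H0 ltac:(lia)) as [[g [Hg [Lg Eg]]] _].
  destruct (@dist_spec G S H T n' g0 HR H0 ltac:(lia)) as [_ U].
  rewrite <- Eg. apply U; auto. lia.
Qed.

Lemma preceq_refl_mono f : (forall n n', (n <= n')%nat -> (f n <= f n')%nat) -> preceq f f.
Proof. intros M. exists 1%nat. split. lia. intros n. specialize (M n (1 * n + 1)%nat). lia. Qed.

Lemma preceq_id_any f : preceq (fun n => n) f.
Proof. exists 1%nat. split. lia. intros n. lia. Qed.

Section Part2.
Variable K : Grp.
Variable SK : list K.
Hypothesis hSK : generates K SK (fun _ => True).
Notation G := (wreath K).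
Notation S := (wr_gens K SK).

Lemma eval_liftf_embK (a : list (bool * K)) : eval_word G (liftf K a) = embK K (eval_word K a).
Proof. apply wr_ext. intros v. rewrite liftf_lamp. reflexivity. rewrite liftf_snd. reflexivity. Qed.

Lemma wl_embK k : word_length G S (embK K k) = wlK SK k.
Proof.
  apply Nat.le_antisymm.
  - destruct (wlK_word hSK k) as [a [Oa [La Ea]]]. rewrite <- La, <- Ea, <- eval_liftf_embK, <- (liftf_len K a).
    apply wl_le. apply liftf_over; auto.
  - apply (wl_lower_K hSK (embK K k)).
Qed.

Lemma liftT_over (T : list K) a : word_over K T a -> word_over G (map (embK K) T) (liftf K a).
Proof.
  intros H p Hp. unfold liftf in Hp. apply in_map_iff in Hp. destruct Hp as [q [<- Hq]].
  simpl. apply in_map. apply (H q Hq).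
Qed.

Definition unlift (w : list (bool * G)) : list (bool * K) := map (fun p => (fst p, snd (snd p))) w.

Lemma unlift_spec (T : list K) w : word_over G (map (embK K) T) w ->
  word_over K T (unlift w) /\ length (unlift w) = length w /\ eval_word K (unlift w) = snd (eval_word G w).
Proof.
  induction w as [|[b y] w IH]; intros Hw.
  - split. intros p []. split; reflexivity.
  - assert (Hp : In y (map (embK K) T)) by (apply (Hw (b, y)); left; auto).
    assert (Hw' : word_over G (map (embK K) T) w) by (intros q Hq; apply Hw; right; auto).
    destruct (IH Hw') as [O [L E]]. apply in_map_iff in Hp. destruct Hp as [t [<- Ht]].
    split; [|split].
    + intros p [<-|Hq]; [simpl; auto|apply O; auto].
    + simpl. f_equal. auto.
    + unfold unlift; cbn [map]. fold (unlift w). rewrite eval_cons, eval_cons, snd_mul, E.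
      destruct b; reflexivity.
Qed.

Lemma wl_embK_T (T : list K) k : reach K T k -> word_length G (map (embK K) T) (embK K k) = word_length K T k.
Proof.
  intros Hr. apply Nat.le_antisymm.
  - destruct (wl_spec Hr) as [[a [Oa [La Ea]]] _].
    rewrite <- La, <- Ea, <- eval_liftf_embK, <- (liftf_len K a). apply wl_le. apply liftT_over; auto.
  - assert (Hr' : reach G (map (embK K) T) (embK K k)).
    { destruct Hr as [a [Oa Ea]]. exists (liftf K a). split. apply liftT_over; auto. rewrite eval_liftf_embK, Ea; auto. }
    destruct (wl_spec Hr') as [[w [Ow [Lw Ew]]] _]. destruct (unlift_spec T Ow) as [O [L E]].
    rewrite <- Lw, <- L. rewrite Ew in E. simpl in E. rewrite <- E. apply wl_le; auto.
Qed.

Lemma dist_part2 (H : K -> Prop) (T : list K) : generates K T H ->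
  forall n, dist G S (fun g => exists k, H k /\ g = embK K k) (map (embK K) T) n = dist K SK H T n.
Proof.
  intros [_ HT] n. unfold dist. f_equal. apply functional_extensionality; intros d.
  apply propositional_extensionality. split.
  - intros [[g [[k [Hk ->]] [L E]]] U]. rewrite wl_embK in L. rewrite wl_embK_T in E by (apply HT; auto).
    split. exists k. auto.
    intros k' Hk' L'. rewrite <- wl_embK_T by (apply HT; auto). apply U. eauto. rewrite wl_embK; auto.
  - intros [[k [Hk [L E]]] U]. split.
    + exists (embK K k). split. eauto. rewrite wl_embK, wl_embK_T by (apply HT; auto). auto.
    + intros g [k' [Hk' ->]] L'. rewrite wl_embK in L'. rewrite wl_embK_T by (apply HT; auto). auto.
Qed.

Lemma part2 (H : K -> Prop) (T : list K) : is_subgroup K H -> generates K T H ->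
  simeq (dist G S (fun g => exists k, H k /\ g = embK K k) (map (embK K) T)) (dist K SK H T).
Proof.
  intros Hs HT.
  assert (M : forall n n', (n <= n')%nat -> (dist K SK H T n <= dist K SK H T n')%nat).
  { apply dist_mono with (g0 := gone K). intros g _. apply (reachK hSK). apply Hs. apply wl_nil. }
  split; (eapply (preceq_refl_mono) in M); destruct M as [C [HC M]]; exists C; split; auto; intros n;
    rewrite !dist_part2; auto.
Qed.

Lemma part2b : simeq (dist G S (@inK K) (map (embK K) SK)) (fun n => n).
Proof.
  assert (E : @inK K = fun g => exists k, (fun _ => True) k /\ g = embK K k).
  { apply functional_extensionality; intros g. apply propositional_extensionality. unfold inK.
    split; intros [k Hk]; exists k; tauto. }
  rewrite E. split; [|apply preceq_id_any].
  exists 1%nat. split. lia. intros n. rewrite dist_part2 by auto.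
  destruct (@dist_spec K SK (fun _ => True) SK n (gone K)) as [[g [_ [L Ev]]] _].
  intros g _. apply (reachK hSK). auto. rewrite wl_nil; lia. lia.
Qed.
End Part2.

Section Lattice.
Variable X : Type.
Definition combo := list (Z * (X -> Z)).
Definition cval (c : combo) (v : X) : Z := sumZ (fun p => (fst p * snd p v)%Z) c.
Definition cost (c : combo) : Z := sumZ (fun p => Z.abs (fst p)) c.
Definition cover (T : list (X -> Z)) (c : combo) := forall p, In p c -> In (snd p) T.
Definition scale (q : Z) (c : combo) : combo := map (fun p => (q * fst p, snd p)%Z) c.
Definition normZ (l : list X) (h : X -> Z) := sumZ (fun u => Z.abs (h u)) l.

Lemma sumZ_app (A : Type) (f : A -> Z) l1 l2 : sumZ f (l1 ++ l2) = (sumZ f l1 + sumZ f l2)%Z.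
Proof. induction l1; simpl; lia. Qed.
Lemma cval_app c1 c2 v : cval (c1 ++ c2) v = (cval c1 v + cval c2 v)%Z.
Proof. unfold cval. apply sumZ_app. Qed.
Lemma cost_app c1 c2 : cost (c1 ++ c2) = (cost c1 + cost c2)%Z.
Proof. unfold cost. apply sumZ_app. Qed.
Lemma cval_scale q c v : cval (scale q c) v = (q * cval c v)%Z.
Proof. unfold cval, scale. induction c; simpl; lia. Qed.
Lemma cost_scale q c : cost (scale q c) = (Z.abs q * cost c)%Z.
Proof. unfold cost, scale. induction c; simpl. lia. rewrite IHc, Z.abs_mul. lia. Qed.
Lemma cost_nonneg c : (0 <= cost c)%Z.
Proof. unfold cost. apply sumZ_nonneg. intros; lia. Qed.
Lemma cover_app T c1 c2 : cover T c1 -> cover T c2 -> cover T (c1 ++ c2).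
Proof. intros A B p Hp. apply in_app_or in Hp. destruct Hp; auto. Qed.
Lemma cover_scale T q c : cover T c -> cover T (scale q c).
Proof. intros A p Hp. unfold scale in Hp. apply in_map_iff in Hp. destruct Hp as [r [<- Hr]]. simpl. apply A; auto. Qed.
Lemma normZ_nonneg l h : (0 <= normZ l h)%Z.
Proof. unfold normZ. apply sumZ_nonneg. intros; lia. Qed.
Lemma normZ_sub l h s q : (normZ l (fun v => h v - q * s v) <= normZ l h + Z.abs q * normZ l s)%Z.
Proof. unfold normZ. induction l; simpl. lia. assert (H := Z.abs_triangle (h a) (- (q * s a))). rewrite Z.abs_opp, Z.abs_mul in H. replace (h a - q * s a)%Z with (h a + - (q * s a))%Z by lia. nia. Qed.

Lemma expand (T T' : list (X -> Z)) D : (0 <= D)%Z ->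
  (forall t', In t' T' -> exists c, cover T c /\ (forall v, cval c v = t' v) /\ (cost c <= D)%Z) ->
  forall c', cover T' c' -> exists c, cover T c /\ (forall v, cval c v = cval c' v) /\ (cost c <= D * cost c')%Z.
Proof.
  intros HD HT c'. induction c' as [|[d t'] c' IH]; intros Hc.
  - exists []. split. intros p []. split. intros; reflexivity. unfold cost; simpl; lia.
  - destruct (HT t') as [c1 [O1 [V1 C1]]]. apply (Hc (d, t')); left; auto.
    destruct IH as [c2 [O2 [V2 C2]]]. intros p Hp; apply Hc; right; auto.
    exists (scale d c1 ++ c2). split. apply cover_app; auto. apply cover_scale; auto. split.
    + intros v. rewrite cval_app, cval_scale, V1, V2. unfold cval; simpl. lia.
    + rewrite cost_app, cost_scale. unfold cost at 3; cbn [sumZ fst snd]. fold (cost c').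
      assert (Z.abs d * cost c1 <= Z.abs d * D)%Z by (apply Z.mul_le_mono_nonneg_l; lia). lia.
Qed.

Lemma gcd_list (T : list (X -> Z)) (u : X) : exists bz, cover T bz /\ forall t, In t T -> (cval bz u | t u)%Z.
Proof.
  induction T as [|t T IH].
  - exists []. split. intros p []. intros t [].
  - destruct IH as [bz [O D]].
    destruct (Zis_gcd_bezout _ _ _ (Zgcd_is_gcd (t u) (cval bz u))) as [x y E].
    exists ((x, t) :: scale y bz). split.
    + intros p [<-|Hp]. left; auto. right. apply (cover_scale y O p Hp).
    + assert (Eg : cval ((x, t) :: scale y bz) u = Z.gcd (t u) (cval bz u)).
      { unfold cval at 1; simpl. fold (cval (scale y bz) u). rewrite cval_scale. lia. }
      rewrite Eg. intros t' [<-|Ht]. apply Z.gcd_divide_l.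
      eapply Z.divide_trans. apply Z.gcd_divide_r. auto.
Qed.

Lemma div_exact a g : (g | a)%Z -> (a / g * g = a)%Z.
Proof.
  intros [k ->]. destruct (Z.eq_dec g 0) as [->|N]. simpl. lia. rewrite Z.div_mul; auto.
Qed.

Lemma cval_zero c v : (forall p, In p c -> snd p v = 0%Z) -> cval c v = 0%Z.
Proof. unfold cval. induction c as [|p c IH]; simpl; intros H. auto. rewrite H, IH; auto. lia. Qed.

Lemma cval_nonzero T c v : cover T c -> cval c v <> 0%Z -> exists t, In t T /\ t v <> 0%Z.
Proof.
  intros Hc Hv. destruct (classic (exists t, In t T /\ t v <> 0%Z)) as [E|N]; auto.
  exfalso. apply Hv. apply cval_zero. intros p Hp. destruct (Z.eq_dec (snd p v) 0); auto.
  exfalso. apply N. exists (snd p). split; auto.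
Qed.

Lemma sumZ_ge_elem (A : Type) (f : A -> Z) l a : (forall x, In x l -> (0 <= f x)%Z) -> In a l -> (f a <= sumZ f l)%Z.
Proof.
  induction l as [|b l IH]; simpl; intros H Ha. contradiction.
  destruct Ha as [->|Ha]. assert (0 <= sumZ f l)%Z by (apply sumZ_nonneg; auto). lia.
  assert (0 <= f b)%Z by auto. assert (f a <= sumZ f l)%Z by auto. lia.
Qed.

Lemma cval_divide (g : Z) c u : (forall p, In p c -> (g | snd p u)%Z) -> (g | cval c u)%Z.
Proof.
  unfold cval. induction c as [|p c IH]; simpl; intros H. apply Z.divide_0_r.
  apply Z.divide_add_r. apply Z.divide_mul_r. auto. auto.
Qed.

Lemma normZ_ext l h1 h2 : (forall v, h1 v = h2 v) -> normZ l h1 = normZ l h2.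
Proof. intros E. unfold normZ. induction l; simpl; auto. rewrite E, IHl. auto. Qed.

Lemma lattice (l : list X) : forall T : list (X -> Z), (forall t, In t T -> forall v, t v <> 0%Z -> In v l) ->
  exists C, (0 <= C)%Z /\ forall c, cover T c -> exists c', cover T c' /\ (forall v, cval c' v = cval c v) /\
    (cost c' <= C * normZ l (cval c))%Z.
Proof.
  induction l as [|u l IH]; intros T HT.
  - exists 0%Z. split. lia. intros c Hc. exists []. split. intros p []. split.
    + intros v. symmetry. apply cval_zero. intros p Hp. destruct (Z.eq_dec (snd p v) 0); auto.
      exfalso. apply (HT (snd p) (Hc p Hp) v n).
    + unfold cost; simpl. lia.
  - destruct (gcd_list T u) as [bz [Obz Dbz]].
    set (g := cval bz u) in *. set (s := cval bz).
    set (f' := fun t : X -> Z => fun v => (t v - (t u / g) * s v)%Z).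
    set (T' := map f' T).
    assert (HT' : forall t, In t T' -> forall v, t v <> 0%Z -> In v l).
    { intros t' Ht' v Hv. apply in_map_iff in Ht'. destruct Ht' as [t [<- Ht]].
      unfold f' in Hv. destruct (classic (v = u)) as [->|N].
      - exfalso. apply Hv. unfold s. fold g. rewrite (div_exact (Dbz t Ht)). lia.
      - assert (t v <> 0 \/ s v <> 0)%Z as [H|H] by lia.
        + destruct (HT t Ht v H) as [E|E]; [congruence|auto].
        + destruct (@cval_nonzero T bz v Obz H) as [t0 [Ht0 H0]].
          destruct (HT t0 Ht0 v H0) as [E|E]; [congruence|auto]. }
    destruct (IH T' HT') as [C' [HC' IHc]].
    set (D := (1 + sumZ (fun t : X -> Z => Z.abs (t u / g)) T * cost bz)%Z).
    assert (HB0 : (0 <= cost bz)%Z) by apply cost_nonneg.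
    assert (HS0 : (0 <= sumZ (fun t : X -> Z => Z.abs (t u / g)) T)%Z) by (apply sumZ_nonneg; intros; lia).
    assert (HD0 : (0 <= D)%Z) by (unfold D; nia).
    assert (HD : forall t', In t' T' -> exists c, cover T c /\ (forall v, cval c v = t' v) /\ (cost c <= D)%Z).
    { intros t' Ht'. apply in_map_iff in Ht'. destruct Ht' as [t [<- Ht]].
      exists ((1%Z, t) :: scale (- (t u / g)) bz). split.
      - intros p [<-|Hp]. simpl; auto. apply (cover_scale _ Obz p Hp).
      - split.
        + intros v. unfold cval at 1. cbn [sumZ fst snd]. fold (cval (scale (- (t u / g)) bz) v).
          rewrite cval_scale. unfold f'. fold s. lia.
        + unfold cost at 1. cbn [sumZ fst]. fold (cost (scale (- (t u / g)) bz)). rewrite cost_scale, Z.abs_opp.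
          assert (Z.abs (t u / g) <= sumZ (fun t => Z.abs (t u / g)) T)%Z
            by (apply sumZ_ge_elem with (f := fun t : X -> Z => Z.abs (t u / g)); auto; intros; lia).
          unfold D. nia. }
    set (Ns := normZ l s). set (B := cost bz).
    assert (HNs : (0 <= Ns)%Z) by apply normZ_nonneg.
    exists (D * C' * (1 + Ns) + B)%Z. split. nia.
    intros c Hc. set (h := cval c).
    set (Q := sumZ (fun p : Z * (X -> Z) => (fst p * (snd p u / g))%Z) c).
    assert (HQg : (Q * g = h u)%Z).
    { unfold Q, h, cval. clear -Hc Dbz. induction c as [|p c IH]; simpl. lia.
      rewrite Z.mul_add_distr_r, IH. rewrite <- Z.mul_assoc, div_exact. auto.
      apply Dbz, Hc; left; auto. intros r Hr; apply Hc; right; auto. }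
    set (ck := map (fun p : Z * (X -> Z) => (fst p, f' (snd p))) c).
    assert (Ock : cover T' ck).
    { intros p Hp. unfold ck in Hp. apply in_map_iff in Hp. destruct Hp as [r [<- Hr]]. simpl. apply in_map. apply Hc; auto. }
    assert (Vck : forall v, cval ck v = (h v - Q * s v)%Z).
    { intros v. unfold ck, h, Q, cval. clear. induction c as [|p c IH]; simpl. lia. rewrite IH. unfold f'. ring. }
    destruct (IHc ck Ock) as [ck' [Ock' [Vck' Cck']]].
    destruct (expand HD0 HD Ock') as [ce [Oce [Vce Cce]]].
    exists (ce ++ scale Q bz). split. apply cover_app; auto. apply cover_scale; auto. split.
    + intros v. rewrite cval_app, cval_scale, Vce, Vck', Vck. fold s. fold h. lia.
    + rewrite cost_app, cost_scale. fold B.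
      assert (Hn : (normZ l (cval ck) <= normZ l h + Z.abs Q * Ns)%Z).
      { rewrite (normZ_ext l _ _ Vck). apply normZ_sub. }
      assert (HQa : (Z.abs Q <= Z.abs (h u))%Z).
      { destruct (Z.eq_dec g 0) as [E|E].
        - assert (Q = 0)%Z as ->. { unfold Q. rewrite E. clear. induction c; simpl; auto. rewrite Zdiv_0_r. lia. }
          lia.
        - rewrite <- HQg, Z.abs_mul. assert (1 <= Z.abs g)%Z by lia. nia. }
      change (normZ (u :: l) h) with (Z.abs (h u) + normZ l h)%Z.
      assert (HN : (0 <= normZ l h)%Z) by apply normZ_nonneg.
      assert (0 <= Z.abs Q)%Z by lia.
      assert (cost ce <= D * (C' * (normZ l h + Z.abs Q * Ns)))%Z.
      { eapply Z.le_trans. exact Cce. apply Z.mul_le_mono_nonneg_l; auto.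
        eapply Z.le_trans. exact Cck'. apply Z.mul_le_mono_nonneg_l; auto. }
      assert (Z.abs Q * Ns <= Z.abs (h u) * Ns)%Z by (apply Z.mul_le_mono_nonneg_r; auto).
      assert (Z.abs Q * B <= Z.abs (h u) * B)%Z by (apply Z.mul_le_mono_nonneg_r; auto).
      assert (0 <= D * C')%Z by nia.
      assert (D * (C' * (normZ l h + Z.abs Q * Ns)) <= D * C' * (normZ l h + Z.abs (h u) * Ns))%Z.
      { rewrite Z.mul_assoc. apply Z.mul_le_mono_nonneg_l; auto. lia. }
      nia.
Qed.
End Lattice.

Section Part1.
Variable K : Grp.
Variable SK : list K.
Hypothesis hSK : generates K SK (fun _ => True).
Notation G := (wreath K).
Notation S := (wr_gens K SK).
Notation e := (gone K).

Definition combo_of (w : list (bool * G)) : list (Z * (K -> Z)) :=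
  map (fun p : bool * G => (if fst p then (-1)%Z else 1%Z, lamp (snd p))) w.

Lemma W_eval w : (forall p, In p w -> inW (snd p)) ->
  (forall v, lamp (eval_word G w) v = cval (combo_of w) v) /\ snd (eval_word G w) = e.
Proof.
  induction w as [|[b y] w IH]; intros Hw.
  - split; reflexivity.
  - assert (Hy : snd y = e) by (apply (Hw (b, y)); left; auto).
    destruct IH as [IH1 IH2]. intros p Hp; apply Hw; right; auto.
    assert (Es : snd (lv (b, y)) = e). { destruct b; cbn [lv fst snd]; [rewrite snd_inv, Hy; apply inv_e|auto]. }
    split.
    + intros v. rewrite eval_cons, lamp_mul, Es, inv_e, mulg1, IH1.
      unfold combo_of; cbn [map]; fold (combo_of w). unfold cval at 2; cbn [sumZ fst snd]. fold (cval (combo_of w) v).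
      destruct b; cbn [lv fst snd]; [rewrite lamp_inv, Hy, mulg1|]; lia.
    + rewrite eval_cons, snd_mul, Es, IH2, mulg1. auto.
Qed.

Lemma combo_of_app w1 w2 : combo_of (w1 ++ w2) = combo_of w1 ++ combo_of w2.
Proof. apply map_app. Qed.

Lemma combo_rep b t n v : cval (combo_of (repeat (b, t) n)) v = ((if b then - Z.of_nat n else Z.of_nat n) * lamp t v)%Z.
Proof.
  induction n as [|n IH]. destruct b; reflexivity.
  cbn [repeat]. unfold combo_of; cbn [map]; fold (combo_of (repeat (b, t) n)).
  unfold cval at 1; cbn [sumZ fst snd]. fold (cval (combo_of (repeat (b, t) n)) v). rewrite IH.
  destruct b; lia.
Qed.

Lemma combo_word (T : list G) c : cover (map (@lamp K) T) c ->
  exists w, word_over G T w /\ Z.of_nat (length w) = cost c /\ forall v, cval (combo_of w) v = cval c v.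
Proof.
  induction c as [|[d f] c IH]; intros Hc.
  - exists []. split. intros p []. split; reflexivity.
  - destruct IH as [w [O [L V]]]. intros p Hp; apply Hc; right; auto.
    assert (Hf : In f (map (@lamp K) T)) by (apply (Hc (d, f)); left; auto).
    apply in_map_iff in Hf. destruct Hf as [t [<- Ht]].
    exists (repeat ((d <? 0)%Z, t) (Z.abs_nat d) ++ w). split; [|split].
    + apply over_app; auto. intros p Hp. apply repeat_spec in Hp. subst p. auto.
    + rewrite length_app, repeat_length. unfold cost; cbn [sumZ fst]. fold (cost c). lia.
    + intros v. rewrite combo_of_app, cval_app, combo_rep, V. unfold cval at 2. cbn [sumZ fst snd].
      fold (cval c v). destruct (Z.ltb_spec d 0); lia.
Qed.

Lemma supp_list (T : list G) : exists l, forall t, In t T -> forall v, lamp t v <> 0%Z -> In v l.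
Proof.
  induction T as [|t T [l IH]]. exists []. intros t [].
  destruct (proj2_sig (fst t)) as [l0 H0]. exists (l0 ++ l). intros t' [<-|Ht] v Hv; apply in_or_app; eauto.
Qed.

Lemma part1_bound (H : G -> Prop) (T : list G) : (forall g, H g -> inW g) -> generates G T H ->
  exists C, forall h, H h -> (word_length G T h <= C * word_length G S h)%nat.
Proof.
  intros HW [HT1 HT2].
  destruct (supp_list T) as [l0 Hl0].
  set (dec := fun x y : K => excluded_middle_informative (x = y)).
  set (l1 := nodup dec l0).
  assert (N1 : NoDup l1) by apply NoDup_nodup.
  destruct (@lattice K l1 (map (@lamp K) T)) as [C [HC HL]].
  { intros f Hf v Hv. apply in_map_iff in Hf. destruct Hf as [t [<- Ht]]. apply nodup_In. eauto. }
  exists (Z.to_nat C). intros h Hh.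
  destruct (proj1 (HT2 h) Hh) as [w [Ow Ew]].
  assert (WW : forall w, word_over G T w -> forall p, In p w -> inW (snd p)).
  { intros w0 O0 p Hp. apply HW. apply HT1. apply O0; auto. }
  destruct (HL (combo_of w)) as [c' [Oc' [Vc' Cc']]].
  { intros p Hp. unfold combo_of in Hp. apply in_map_iff in Hp. destruct Hp as [q [<- Hq]]. simpl. apply in_map. apply Ow; auto. }
  destruct (combo_word T Oc') as [w' [O' [L' V']]].
  assert (E' : eval_word G w' = h).
  { apply wr_ext.
    - intros v. rewrite (proj1 (W_eval w' (WW w' O'))), V', Vc', <- (proj1 (W_eval w (WW w Ow))), Ew. auto.
    - rewrite (proj2 (W_eval w' (WW w' O'))). symmetry. apply HW; auto. }
  assert (Hn : normZ l1 (cval (combo_of w)) = sumZ (fun p => Z.abs (lamp h p)) l1).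
  { unfold normZ. apply f_equal2; auto. apply functional_extensionality; intros v.
    rewrite <- (proj1 (W_eval w (WW w Ow))), Ew. auto. }
  assert (Hlow := wl_lower hSK h N1). rewrite <- Hn in Hlow.
  assert (Hle : (word_length G T h <= length w')%nat) by (rewrite <- E'; apply wl_le; auto).
  assert (0 <= normZ l1 (cval (combo_of w)))%Z by apply normZ_nonneg.
  assert (C * normZ l1 (cval (combo_of w)) <= C * Z.of_nat (word_length G S h))%Z by (apply Z.mul_le_mono_nonneg_l; auto).
  lia.
Qed.

Lemma part1 (H : G -> Prop) (T : list G) : is_subgroup G H -> (forall g, H g -> inW g) ->
  generates G T H -> simeq (dist G S H T) (fun n => n).
Proof.
  intros Hs HW HT. destruct (part1_bound HW HT) as [C HC].
  split; [|apply preceq_id_any].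
  exists (Datatypes.S C). split. lia. intros n.
  destruct (@dist_spec G S H T n (gone G) (fun g _ => reach_all hSK g) (proj1 Hs)) as [[g [Hg [Lg Eg]]] _].
  rewrite wl_nil; lia.
  rewrite <- Eg. specialize (HC g Hg). nia.
Qed.
End Part1.

Section HomZ.
Variable K : Grp.
Variable SK : list K.
Hypothesis hSK : generates K SK (fun _ => True).
Notation G := (wreath K).
Notation S := (wr_gens K SK).
Notation e := (gone K).
Notation m := (gmul K).
Notation i := (ginv K).

Lemma magma_inv_uniq (x y : G) : gmul G y x = gone G -> y = ginv G x.
Proof.
  intros H. assert (Hs : snd y = i (snd x)).
  { apply (f_equal snd) in H. rewrite snd_mul in H. apply (g_cancel_r (snd x)). rewrite H, mulVg. auto. }
  apply wr_ext; [|rewrite snd_inv; auto].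
  intros v. assert (Hl := f_equal (fun z => lamp z v) H). cbv beta in Hl. rewrite lamp_mul in Hl.
  rewrite lamp_one in Hl. rewrite lamp_inv, Hs, inv_inv in *. lia.
Qed.

Variable psi : Z -> G.
Hypothesis Hhom : forall a b, psi (a + b)%Z = gmul G (psi a) (psi b).
Hypothesis Hinj : forall a b, psi a = psi b -> a = b.

Lemma hom0 : psi 0%Z = gone G.
Proof.
  assert (H := Hhom 0 0). change (0+0)%Z with 0%Z in H.
  assert (Hs : snd (psi 0%Z) = e).
  { apply (f_equal snd) in H. rewrite snd_mul in H. apply (g_cancel_l (snd (psi 0%Z))). rewrite <- H, mulg1. auto. }
  apply wr_ext; [|auto]. intros v. assert (Hl := f_equal (fun z => lamp z v) H). cbv beta in Hl.
  rewrite lamp_mul, Hs, inv_e, mulg1 in Hl. rewrite lamp_one. lia.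
Qed.

Lemma homN a : psi (- a)%Z = ginv G (psi a).
Proof. apply magma_inv_uniq. rewrite <- Hhom. replace (- a + a)%Z with 0%Z by lia. apply hom0. Qed.

Lemma kap_hom a b : snd (psi (a + b)%Z) = m (snd (psi a)) (snd (psi b)).
Proof. rewrite Hhom. apply snd_mul. Qed.

Lemma lamp_hom a b v : lamp (psi (a + b)%Z) v = (lamp (psi a) v + lamp (psi b) (m v (i (snd (psi a)))))%Z.
Proof. rewrite Hhom. apply lamp_mul. Qed.

Definition img (g : G) := exists n, psi n = g.

Definition pre (t : G) : Z := epsilon (inhabits 0%Z) (fun n => psi n = t).
Lemma pre_spec t : img t -> psi (pre t) = t.
Proof. intros H. unfold pre. apply (epsilon_spec (inhabits 0%Z) (fun n => psi n = t)). auto. Qed.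

Definition sigw (w : list (bool * G)) : Z := sumZ (fun p : bool * G => ((if fst p then (-1) else 1) * pre (snd p))%Z) w.

Variable T : list G.
Hypothesis HT : generates G T img.

Lemma eval_T w : word_over G T w -> eval_word G w = psi (sigw w).
Proof.
  induction w as [|[b t] w IH]; intros Hw.
  - simpl. symmetry. apply hom0.
  - assert (Ht : img t) by (apply (proj1 HT); apply (Hw (b, t)); left; auto).
    rewrite eval_cons, IH by (intros p Hp; apply Hw; right; auto).
    unfold sigw; cbn [sumZ fst snd]. fold (sigw w). rewrite Hhom. f_equal.
    destruct b; cbn [lv fst snd].
    + rewrite <- (pre_spec Ht) at 1. rewrite <- homN. f_equal; lia.
    + rewrite Z.mul_1_l. symmetry. apply pre_spec; auto.
Qed.

Definition flipw (w : list (bool * G)) := map (fun p => (negb (fst p), snd p)) w.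
Lemma sig_flip w : sigw (flipw w) = (- sigw w)%Z.
Proof. unfold sigw, flipw. induction w as [|[b t] w IH]. reflexivity. cbn [map sumZ fst snd]. rewrite IH. destruct b; cbn [negb]; ring. Qed.
Lemma sig_app w1 w2 : sigw (w1 ++ w2) = (sigw w1 + sigw w2)%Z.
Proof. unfold sigw. apply sumZ_app. Qed.
Lemma flip_over w : word_over G T w -> word_over G T (flipw w).
Proof. intros H p Hp. unfold flipw in Hp. apply in_map_iff in Hp. destruct Hp as [q [<- Hq]]. simpl. apply (H q Hq). Qed.
Lemma flip_len w : length (flipw w) = length w.
Proof. apply length_map. Qed.

Fixpoint repw (w : list (bool * G)) (n : nat) := match n with O => [] | Datatypes.S n' => w ++ repw w n' end.
Lemma repw_sig w n : sigw (repw w n) = (Z.of_nat n * sigw w)%Z.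
Proof. induction n; cbn [repw]. reflexivity. rewrite sig_app, IHn, Nat2Z.inj_succ. ring. Qed.
Lemma repw_len w n : length (repw w n) = (n * length w)%nat.
Proof. induction n; cbn [repw]. auto. rewrite length_app, IHn. lia. Qed.
Lemma repw_over w n : word_over G T w -> word_over G T (repw w n).
Proof. intros H. induction n; simpl. intros p []. apply over_app; auto. Qed.

Lemma reach_T a : reach G T (psi a).
Proof. apply (proj2 HT). exists a; auto. Qed.

Lemma Tbounds : exists A, (1 <= A)%nat /\ forall a,
  (word_length G T (psi a) <= A * Z.abs_nat a)%nat /\ (Z.abs_nat a <= A * word_length G T (psi a))%nat.
Proof.
  destruct (proj1 (proj2 HT (psi 1%Z)) (ex_intro _ 1%Z eq_refl)) as [w1 [O1 E1]].
  assert (S1 : sigw w1 = 1%Z) by (apply Hinj; rewrite <- eval_T; auto).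
  set (M := sumZ (fun t => Z.abs (pre t)) T).
  assert (HM : forall w, word_over G T w -> (Z.abs (sigw w) <= M * Z.of_nat (length w))%Z).
  { induction w as [|[b t] w IH]; intros Hw. simpl. lia.
    assert (Ht : In t T) by (apply (Hw (b, t)); left; auto).
    assert (Z.abs (pre t) <= M)%Z by (apply sumZ_ge_elem with (f := fun t => Z.abs (pre t)); auto; intros; lia).
    specialize (IH ltac:(intros p Hp; apply Hw; right; auto)).
    unfold sigw in *; cbn [sumZ fst snd length]. rewrite Nat2Z.inj_succ. destruct b; lia. }
  exists (Datatypes.S (length w1 + Z.to_nat M)). split. lia. intros a. split.
  - set (w := repw (if (a <? 0)%Z then flipw w1 else w1) (Z.abs_nat a)).
    assert (Ow : word_over G T w) by (apply repw_over; destruct (a <? 0)%Z; auto using flip_over).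
    assert (Ew : eval_word G w = psi a).
    { rewrite eval_T; auto. f_equal. unfold w. rewrite repw_sig.
      destruct (Z.ltb_spec a 0); [rewrite sig_flip|]; rewrite S1; lia. }
    rewrite <- Ew. eapply Nat.le_trans. apply wl_le; auto. unfold w. rewrite repw_len.
    destruct (a <? 0)%Z; [rewrite flip_len|]; nia.
  - destruct (wl_spec (reach_T a)) as [[w [Ow [Lw Ew]]] _].
    assert (Sw : sigw w = a) by (apply Hinj; rewrite <- eval_T; auto).
    specialize (HM w Ow). rewrite Sw, Lw in HM. assert (0 <= M)%Z by (apply sumZ_nonneg; intros; lia). nia.
Qed.

Lemma dist_img n : dist_P G S img T n (dist G S img T n).
Proof.
  apply dist_spec with (g0 := gone G). intros g _. apply reach_all; auto. exists 0%Z. apply hom0.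
  rewrite wl_nil. lia.
Qed.

Lemma dist_img_mono n n' : (n <= n')%nat -> (dist G S img T n <= dist G S img T n')%nat.
Proof.
  apply dist_mono with (g0 := gone G). intros g _. apply reach_all; auto. exists 0%Z. apply hom0. apply wl_nil.
Qed.

Lemma lin_undist : (exists c, forall a, (Z.abs_nat a <= c * word_length G S (psi a) + c)%nat) ->
  preceq (dist G S img T) (fun n => n).
Proof.
  intros [c Hc]. destruct Tbounds as [A [HA HB]].
  exists (Datatypes.S (A * c)). split. lia. intros n.
  destruct (dist_img n) as [[g [[a <-] [Lg Eg]]] _].
  rewrite <- Eg. destruct (HB a) as [H1 _]. specialize (Hc a). nia.
Qed.
End HomZ.


Lemma compare (K : Grp) (SK : list K) (hSK : generates K SK (fun _ => True)) (psi1 psi2 : Z -> wreath K) T1 T2 :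
  (forall a b, psi1 (a + b)%Z = gmul (wreath K) (psi1 a) (psi1 b)) -> (forall a b, psi1 a = psi1 b -> a = b) ->
  (forall a b, psi2 (a + b)%Z = gmul (wreath K) (psi2 a) (psi2 b)) -> (forall a b, psi2 a = psi2 b -> a = b) ->
  generates (wreath K) T1 (img psi1) -> generates (wreath K) T2 (img psi2) ->
  (exists C, forall a, (word_length (wreath K) (wr_gens K SK) (psi1 a) <= C * word_length (wreath K) (wr_gens K SK) (psi2 a) + C)%nat /\
                       (word_length (wreath K) (wr_gens K SK) (psi2 a) <= C * word_length (wreath K) (wr_gens K SK) (psi1 a) + C)%nat) ->
  simeq (dist (wreath K) (wr_gens K SK) (img psi1) T1) (dist (wreath K) (wr_gens K SK) (img psi2) T2).
Proof.
  intros h1 i1 h2 i2 G1 G2 [C HC].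
  destruct (Tbounds h1 i1 G1) as [A1 [HA1 B1]]. destruct (Tbounds h2 i2 G2) as [A2 [HA2 B2]].
  split.
  - exists (Datatypes.S (A1 * A2 + C)). split. lia. intros n.
    destruct (dist_img hSK psi1 h1 T1 n) as [[g [[a <-] [Lg Eg]]] _].
    destruct (dist_img hSK psi2 h2 T2 (Datatypes.S (A1 * A2 + C) * n + Datatypes.S (A1 * A2 + C))) as [_ U].
    assert (X := U (psi2 a) (ex_intro _ a eq_refl)). destruct (HC a) as [_ Y].
    specialize (X ltac:(nia)). destruct (B1 a) as [Z1 _]. destruct (B2 a) as [_ Z2]. nia.
  - exists (Datatypes.S (A1 * A2 + C)). split. lia. intros n.
    destruct (dist_img hSK psi2 h2 T2 n) as [[g [[a <-] [Lg Eg]]] _].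
    destruct (dist_img hSK psi1 h1 T1 (Datatypes.S (A1 * A2 + C) * n + Datatypes.S (A1 * A2 + C))) as [_ U].
    assert (X := U (psi1 a) (ex_intro _ a eq_refl)). destruct (HC a) as [Y _].
    specialize (X ltac:(nia)). destruct (B2 a) as [Z1 _]. destruct (B1 a) as [_ Z2]. nia.
Qed.

Section Cob.
Variable K : Grp.
Variable SK : list K.
Hypothesis hSK : generates K SK (fun _ => True).
Notation G := (wreath K).
Notation S := (wr_gens K SK).
Notation e := (gone K).
Notation m := (gmul K).
Notation i := (ginv K).

Lemma fix_snd w (x : G) : word_over G S w -> (forall v, lamp x v = lamp (eval_word G w) v) ->
  (word_length G S x <= 2 * length w + wlK SK (snd x))%nat.
Proof.
  intros O Lw. set (k0 := snd (eval_word G w)).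
  destruct (wlK_word hSK (m (i k0) (snd x))) as [a [Oa [La Ea]]].
  assert (E : eval_word G (w ++ liftf K a) = x).
  { apply wr_ext. intros v. rewrite eval_app_lamp, liftf_lamp, Lw. lia.
    rewrite eval_app_snd, liftf_snd, Ea. apply mul_inv_l'. }
  assert (Ow : word_over G S (w ++ liftf K a)) by (apply over_app; auto using liftf_over).
  rewrite <- E at 1. eapply Nat.le_trans. apply wl_le; auto.
  rewrite length_app, liftf_len, La.
  assert (H1 := wlK_mul hSK (i k0) (snd x)). rewrite wlK_inv_eq in H1; auto.
  assert (H2 := wl_snd_le O). fold k0 in H2. lia.
Qed.

Lemma cob_word (g : K -> Z) Q : (forall v, g v <> 0%Z -> In v Q) ->
  exists C0, forall x : G, (forall v, lamp x v = (g v - g (m v (i (snd x))))%Z) ->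
    (word_length G S x <= C0 + 3 * wlK SK (snd x))%nat.
Proof.
  intros HQ.
  destruct (build K hSK Q g HQ) as [w1 [O1 [L1 _]]].
  destruct (build K hSK Q (fun v => (- g v)%Z)) as [w2 [O2 [L2 _]]].
  { intros v Hv. apply HQ. lia. }
  set (r := rprod w1).
  exists (2 * (length w1 + length w2 + wlK SK r))%nat. intros x Hx.
  destruct (wlK_word hSK (m (snd x) (i r))) as [a [Oa [La Ea]]].
  set (W := w1 ++ (liftf K (rev a) ++ w2)).
  assert (OW : word_over G S W) by (repeat apply over_app; auto using liftf_over, over_rev).
  assert (H := fix_snd x OW).
  assert (HL : forall v, lamp x v = lamp (eval_word G W) v).
  { intros v. unfold W. rewrite Hx, !eval_app_lamp, L1, liftf_lamp, L2, liftf_rprod, rev_involutive, Ea.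
    fold r. rewrite inv_mul, inv_inv, (mulA K (m v (i r)) r), mul_inv_r'. lia. }
  specialize (H HL). unfold W in H. rewrite !length_app, liftf_len, length_rev, La in H.
  assert (H1 := wlK_mul hSK (snd x) (i r)). rewrite wlK_inv_eq in H1; auto. lia.
Qed.
End Cob.

Definition ind (P : Prop) : Z := if excluded_middle_informative P then 1%Z else 0%Z.
Lemma ind_T (P : Prop) : P -> ind P = 1%Z.
Proof. unfold ind. destruct (excluded_middle_informative P); tauto. Qed.
Lemma ind_F (P : Prop) : ~ P -> ind P = 0%Z.
Proof. unfold ind. destruct (excluded_middle_informative P); tauto. Qed.
Lemma ind_iff (P Q : Prop) : (P <-> Q) -> ind P = ind Q.
Proof. intros H. unfold ind. destruct (excluded_middle_informative P), (excluded_middle_informative Q); tauto. Qed.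

Lemma sumZ_ext_in (A : Type) (f g : A -> Z) l : (forall a, In a l -> f a = g a) -> sumZ f l = sumZ g l.
Proof. induction l; simpl; intros H; auto. rewrite H, IHl; auto. Qed.
Lemma sumZ_zero (A : Type) (l : list A) : sumZ (fun _ => 0%Z) l = 0%Z.
Proof. induction l; simpl; auto. Qed.
Lemma sumZ_nonzero (A : Type) (f : A -> Z) l : sumZ f l <> 0%Z -> exists a, In a l /\ f a <> 0%Z.
Proof.
  induction l as [|a l IH]; simpl; intros H. lia.
  destruct (Z.eq_dec (f a) 0).
  - assert (H' : sumZ f l <> 0%Z) by lia. destruct (IH H') as [b [Hb Hf]]. eauto.
  - eauto.
Qed.
Lemma sumZ_const1 (A : Type) (l : list A) : sumZ (fun _ => 1%Z) l = Z.of_nat (length l).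
Proof. induction l; cbn [sumZ length]; auto. rewrite IHl, Nat2Z.inj_succ. lia. Qed.

Lemma sum_ind_eq (A : Type) (f : A -> Z) l v : NoDup l ->
  (In v l -> sumZ (fun u => (f u * ind (v = u))%Z) l = f v) /\
  (~ In v l -> sumZ (fun u => (f u * ind (v = u))%Z) l = 0%Z).
Proof.
  induction 1 as [|a l Ha Hl IH]; simpl. split; [tauto|auto].
  destruct IH as [I1 I2]. split.
  - intros [<-|Hv]. rewrite ind_T, I2; auto. lia.
    rewrite ind_F, I1; auto. lia. intros <-. contradiction.
  - intros N. rewrite ind_F, I2; auto. lia.
Qed.

Lemma fin_bound (F : Z -> Z) (n : nat) : exists R, (0 <= R)%Z /\ forall r, (0 <= r < Z.of_nat n)%Z -> (Z.abs (F r) <= R)%Z.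
Proof.
  induction n as [|n [R [HR IH]]]. exists 0%Z. split. lia. intros; lia.
  exists (Z.max R (Z.abs (F (Z.of_nat n)))). split. lia. intros r Hr.
  destruct (Z.eq_dec r (Z.of_nat n)) as [->|N]. lia. assert (Z.abs (F r) <= R)%Z by (apply IH; lia). lia.
Qed.

Section Part3.
Variable K : Grp.
Variable SK : list K.
Hypothesis hSK : generates K SK (fun _ => True).
Notation G := (wreath K).
Notation S := (wr_gens K SK).
Notation e := (gone K).
Notation m := (gmul K).
Notation i := (ginv K).

Variable phi : Z -> G.
Hypothesis Hhom : forall a b, phi (a + b)%Z = gmul G (phi a) (phi b).
Hypothesis Hinj : forall a b, phi a = phi b -> a = b.

Definition kap a := snd (phi a).
Definition Lf a := lamp (phi a).
Definition NS a := word_length G S (phi a).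

Lemma kap_add a b : kap (a + b) = m (kap a) (kap b).
Proof. apply kap_hom; auto. Qed.
Lemma kap0 : kap 0 = e.
Proof. unfold kap. rewrite hom0; auto. Qed.
Lemma kapN a : kap (- a) = i (kap a).
Proof. unfold kap. rewrite homN; auto. Qed.
Lemma L_add a b v : Lf (a + b) v = (Lf a v + Lf b (m v (i (kap a))))%Z.
Proof. apply lamp_hom; auto. Qed.
Lemma L0 v : Lf 0 v = 0%Z.
Proof. unfold Lf. rewrite hom0; auto. Qed.
Lemma ikap a : i (kap a) = kap (- a).
Proof. rewrite kapN. auto. Qed.
Lemma vk v a b : m (m v (kap a)) (kap b) = m v (kap (a + b)).
Proof. rewrite kap_add, mulA. auto. Qed.

Lemma NS_lower a u : (Z.abs (Lf a u) <= Z.of_nat (NS a))%Z.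
Proof.
  assert (H := wl_lower hSK (phi a) (P := [u]) ltac:(repeat constructor; simpl; tauto)).
  simpl in H. unfold NS, Lf. lia.
Qed.

Lemma caseA : (exists p, p <> 0%Z /\ kap p = e) -> exists c, forall a, (Z.abs_nat a <= c * NS a + c)%nat.
Proof.
  intros [p0 [Hp0 Ep0]].
  assert (exists p, (0 < p)%Z /\ kap p = e) as [p [Hp Ep]].
  { destruct (Z_lt_le_dec 0 p0). eauto. exists (- p0)%Z. split. lia. rewrite kapN, Ep0. apply inv_e. }
  assert (Hkpj : forall j, kap (p * j) = e).
  { apply Z.peano_ind.
    - rewrite Z.mul_0_r. apply kap0.
    - intros j IH. rewrite Z.mul_succ_r, kap_add, IH, Ep. apply mul1g.
    - intros j IH. rewrite Z.mul_pred_r, <- Z.add_opp_r, kap_add, IH, kapN, Ep, inv_e. apply mul1g. }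
  assert (exists u, Lf p u <> 0%Z) as [u Hu].
  { apply NNPP. intros N. assert (p = 0%Z); [|lia]. apply Hinj. rewrite hom0; auto.
    apply wr_ext. intros v. rewrite lamp_one. destruct (Z.eq_dec (Lf p v) 0); auto. exfalso; eauto. exact Ep. }
  assert (HLpj : forall j, Lf (p * j) u = (j * Lf p u)%Z).
  { apply Z.peano_ind.
    - rewrite Z.mul_0_r, L0. lia.
    - intros j IH. rewrite Z.mul_succ_r, L_add, IH, Hkpj, inv_e, mulg1. lia.
    - intros j IH. rewrite Z.mul_pred_r, <- Z.add_opp_r, L_add, IH, Hkpj, inv_e, mulg1.
      assert (Lf (- p) u = - Lf p u)%Z.
      { assert (H := L_add p (- p) u). rewrite Z.add_opp_diag_r, L0 in H. rewrite Ep, inv_e, mulg1 in H. lia. }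
      lia. }
  destruct (fin_bound (fun r => Lf r u) (Z.to_nat p)) as [R [HR0 HR]].
  exists (Z.to_nat p * (Z.to_nat R + 1))%nat. intros a.
  assert (Ea := Z.div_mod a p ltac:(lia)). assert (Hr := Z.mod_pos_bound a p Hp).
  set (j := (a / p)%Z) in *. set (r := (a mod p)%Z) in *.
  assert (HLa : Lf a u = (j * Lf p u + Lf r u)%Z).
  { rewrite Ea, L_add, HLpj, Hkpj, inv_e, mulg1. auto. }
  assert (Hb := HR r ltac:(lia)). assert (Hn := NS_lower a u).
  assert (Z.abs j <= Z.abs (j * Lf p u))%Z by (rewrite Z.abs_mul; nia).
  assert (Z.abs a <= p * Z.abs j + p)%Z by nia.
  assert (Hj : (Z.abs j <= Z.of_nat (NS a) + R)%Z) by lia.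
  assert (X : (Z.abs a <= p * (Z.of_nat (NS a) + R) + p)%Z) by nia.
  assert (Y : (p * (Z.of_nat (NS a) + R) + p <= p * (R + 1) * Z.of_nat (NS a) + p * (R + 1))%Z) by nia.
  assert (Z.of_nat (Z.abs_nat a) = Z.abs a) by lia.
  assert (Z.of_nat (Z.to_nat p * (Z.to_nat R + 1) * NS a + Z.to_nat p * (Z.to_nat R + 1))%nat =
          p * (R + 1) * Z.of_nat (NS a) + p * (R + 1))%Z by (rewrite Nat2Z.inj_add, !Nat2Z.inj_mul, Nat2Z.inj_add; lia).
  lia.
Qed.

Section CaseB.
Hypothesis Kinj : forall a b, kap a = kap b -> a = b.
Variable l : list K.
Hypothesis lND : NoDup l.
Hypothesis lsupp : forall v, Lf 1 v <> 0%Z -> In v l.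
Variable D : Z.
Hypothesis HD : (0 <= D)%Z.
Hypothesis Dbound : forall u u', In u l -> In u' l -> forall j, u' = m u (kap j) -> (Z.abs j <= D)%Z.

Definition Pos v u := exists n, (0 <= n)%Z /\ m v (kap (- n)) = u.
Definition gf v := sumZ (fun u => (Lf 1 u * ind (Pos v u))%Z) l.
Definition Sg u := sumZ (fun u' => (Lf 1 u' * ind (exists j, u' = m u (kap j)))%Z) l.

Lemma kap_e a : kap a = e -> a = 0%Z.
Proof. intros H. apply Kinj. rewrite kap0. auto. Qed.

Lemma ind_Pos v u : ind (Pos v u) = (ind (v = u) + ind (Pos (m v (kap (-1))) u))%Z.
Proof.
  destruct (classic (v = u)) as [<-|N].
  - rewrite ind_T, ind_T, ind_F; auto.
    + intros [n [Hn E]]. rewrite vk in E. assert (m v (kap (-1 + - n)) = m v e) by (rewrite mulg1; auto).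
      apply g_cancel_l, kap_e in H. lia.
    + exists 0%Z. split. lia. change (-0)%Z with 0%Z. rewrite kap0, mulg1. auto.
  - rewrite (ind_F N). simpl. apply ind_iff. split.
    + intros [n [Hn E]]. destruct (Z.eq_dec n 0) as [->|Nz].
      * change (-0)%Z with 0%Z in E. rewrite kap0, mulg1 in E. contradiction.
      * exists (n - 1)%Z. split. lia. rewrite vk. rewrite <- E. f_equal. f_equal. lia.
    + intros [n [Hn E]]. exists (n + 1)%Z. split. lia. rewrite <- E, vk. f_equal. f_equal. lia.
Qed.

Lemma sumZ_ext (A : Type) (f g : A -> Z) l0 : (forall a, f a = g a) -> sumZ f l0 = sumZ g l0.
Proof. intros H. apply sumZ_ext_in. auto. Qed.

Lemma g_step v : (gf v - gf (m v (kap (-1))))%Z = Lf 1 v.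
Proof.
  unfold gf. rewrite (sumZ_ext _ (fun u => Lf 1 u * ind (v = u) + Lf 1 u * ind (Pos (m v (kap (-1))) u))%Z).
  rewrite sumZ_add. destruct (sum_ind_eq (Lf 1) v lND) as [I1 I2].
  destruct (classic (In v l)) as [Hv|Hv].
  - rewrite I1; auto. lia.
  - rewrite I2; auto. destruct (Z.eq_dec (Lf 1 v) 0). lia. exfalso. apply Hv. auto.
  - intros u. rewrite ind_Pos. ring.
Qed.

Lemma L_formula : forall a v, Lf a v = (gf v - gf (m v (kap (- a))))%Z.
Proof.
  apply (Z.peano_ind (fun a => forall v, Lf a v = (gf v - gf (m v (kap (- a))))%Z)).
  - intros v. rewrite L0. change (-0)%Z with 0%Z. rewrite kap0, mulg1. lia.
  - intros a IH v. rewrite <- Z.add_1_r, L_add, IH, ikap.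
    rewrite <- (g_step (m v (kap (- a)))), vk. replace (- a + -1)%Z with (- (a + 1))%Z by lia. lia.
  - intros a IH v. assert (H := L_add (Z.pred a) 1 v). replace (Z.pred a + 1)%Z with a in H by lia.
    rewrite IH, ikap in H. rewrite <- (g_step (m v (kap (- Z.pred a)))), vk in H.
    replace (- Z.pred a + -1)%Z with (- a)%Z in H by lia. lia.
Qed.

Lemma g_far_pos u a : In u l -> (D <= a)%Z -> gf (m u (kap a)) = Sg u.
Proof.
  intros Hu Ha. unfold gf, Sg. apply sumZ_ext_in. intros u' Hu'. f_equal. apply ind_iff. split.
  - intros [n [Hn E]]. exists (a + - n)%Z. rewrite <- E, vk. auto.
  - intros [j E]. assert (Hj : (Z.abs _ <= D)%Z) by (eapply Dbound; [exact Hu | exact Hu' | exact E]). exists (a - j)%Z. split. lia.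
    rewrite E, vk. f_equal. f_equal. lia.
Qed.

Lemma g_far_neg u a : In u l -> (a < - D)%Z -> gf (m u (kap a)) = 0%Z.
Proof.
  intros Hu Ha. unfold gf. rewrite <- (sumZ_zero l). apply sumZ_ext_in. intros u' Hu'.
  rewrite ind_F. lia. intros [n [Hn E]]. rewrite vk in E. symmetry in E.
  assert (Hj : (Z.abs _ <= D)%Z) by (eapply Dbound; [exact Hu | exact Hu' | exact E]). lia.
Qed.

Lemma caseB1 u : In u l -> Sg u <> 0%Z -> exists c, forall a, (Z.abs_nat a <= c * NS a + c)%nat.
Proof.
  intros Hu HS. exists (Z.to_nat (2 * D) + 1)%nat. intros a.
  set (x0 := if (0 <=? a)%Z then D else (D + a)%Z).
  set (P := map (fun k => m u (kap (x0 + Z.of_nat k))) (seq 0 (Z.to_nat (Z.abs a - 2 * D)))).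
  assert (NP : NoDup P).
  { apply NoDup_map_inj. intros k1 k2 E. apply g_cancel_l, Kinj in E. lia. apply seq_NoDup. }
  assert (Hlow := wl_lower hSK (phi a) NP).
  assert (H1 : (sumZ (fun _ => 1%Z) P <= sumZ (fun p => Z.abs (lamp (phi a) p)) P)%Z).
  { apply sumZ_le. intros p Hp. unfold P in Hp. apply in_map_iff in Hp. destruct Hp as [k [<- Hk]].
    apply in_seq in Hk. change (lamp (phi a) (m u (kap (x0 + Z.of_nat k)))) with (Lf a (m u (kap (x0 + Z.of_nat k)))).
    rewrite L_formula, vk. unfold x0. destruct (Z.leb_spec 0 a).
    - rewrite g_far_pos, g_far_neg; auto; lia.
    - rewrite g_far_pos with (a := (D + a + Z.of_nat k + - a)%Z), g_far_neg; auto; lia. }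
  rewrite sumZ_const1 in H1.
  assert (LP : length P = Z.to_nat (Z.abs a - 2 * D)) by (unfold P; rewrite length_map, length_seq; auto).
  rewrite LP in H1. fold (NS a) in Hlow.
  assert (Z.of_nat (Z.abs_nat a) = Z.abs a) by lia.
  assert (Z.of_nat ((Z.to_nat (2 * D) + 1) * NS a + (Z.to_nat (2 * D) + 1))%nat =
          (2 * D + 1) * Z.of_nat (NS a) + (2 * D + 1))%Z by (rewrite Nat2Z.inj_add, !Nat2Z.inj_mul, Nat2Z.inj_add; lia).
  nia.
Qed.

Lemma caseB2 : (forall u, In u l -> Sg u = 0%Z) ->
  forall v, gf v <> 0%Z -> In v (flat_map (fun u => map (fun k => m u (kap (Z.of_nat k))) (seq 0 (Z.to_nat D))) l).
Proof.
  intros H0 v Hv. destruct (sumZ_nonzero _ _ Hv) as [u [Hu Hf]].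
  assert (Hp : Pos v u). { apply NNPP. intros N. rewrite ind_F in Hf; auto. lia. }
  destruct Hp as [n [Hn E]].
  assert (Ev : v = m u (kap n)). { rewrite <- E, vk. replace (- n + n)%Z with 0%Z by lia. rewrite kap0, mulg1. auto. }
  destruct (Z_lt_le_dec n D) as [Lt|Ge].
  - apply in_flat_map. exists u. split; auto. apply in_map_iff. exists (Z.to_nat n). split.
    rewrite Ev. f_equal. f_equal. lia. apply in_seq. lia.
  - exfalso. apply Hv. rewrite Ev, g_far_pos; auto.
Qed.
End CaseB.
End Part3.

Section Final3.
Variable K : Grp.
Variable SK : list K.
Hypothesis hSK : generates K SK (fun _ => True).
Notation G := (wreath K).
Notation S := (wr_gens K SK).
Notation e := (gone K).
Notation m := (gmul K).
Notation i := (ginv K).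

Lemma D_exists (kp : Z -> K) : (forall a b, kp a = kp b -> a = b) -> forall l1 l2 : list K,
  exists D, (0 <= D)%Z /\ forall u u', In u l1 -> In u' l2 -> forall j, u' = m u (kp j) -> (Z.abs j <= D)%Z.
Proof.
  intros Kinj l1 l2. induction l1 as [|u l1 [D1 [HD1 IH1]]].
  - exists 0%Z. split. lia. intros u u' [].
  - assert (exists D, (0 <= D)%Z /\ forall u', In u' l2 -> forall j, u' = m u (kp j) -> (Z.abs j <= D)%Z) as [D2 [HD2 H2]].
    { clear IH1. induction l2 as [|u' l2 [D [HD IH]]].
      - exists 0%Z. split. lia. intros u' [].
      - destruct (classic (exists j, u' = m u (kp j))) as [[j0 E0]|N].
        + exists (Z.max D (Z.abs j0)). split. lia. intros u'' [<-|Hu''] j E.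
          * rewrite E0 in E. apply g_cancel_l, Kinj in E. subst. lia.
          * specialize (IH u'' Hu'' j E). lia.
        + exists D. split; auto. intros u'' [<-|Hu''] j E. exfalso; eauto. eauto. }
    exists (Z.max D1 D2). split. lia. intros u0 u' [<-|Hu0] Hu' j E.
    + specialize (H2 u' Hu' j E). lia.
    + specialize (IH1 u0 u' Hu0 Hu' j E). lia.
Qed.

Lemma part3 (Hh : G -> Prop) (Th : list G) : iso_Z G Hh -> generates G Th Hh ->
  ~ simeq (dist G S Hh Th) (fun n => n) ->
  exists (H : G -> Prop) (T : list G), iso_Z G H /\ ((forall g, H g -> inW g) \/ (forall g, H g -> inK g)) /\
    generates G T H /\ simeq (dist G S H T) (dist G S Hh Th).
Proof.
  intros [phi [Hhom [Hinj Hiff]]] HT Hns.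
  assert (EH : Hh = img phi).
  { apply functional_extensionality; intros g. apply propositional_extensionality. rewrite Hiff. unfold img. tauto. }
  subst Hh.
  assert (Hlin : (exists c, forall a, (Z.abs_nat a <= c * NS SK phi a + c)%nat) -> False).
  { intros Hc. apply Hns. split. apply (lin_undist hSK Hhom Hinj HT Hc). apply preceq_id_any. }
  destruct (classic (forall a b, kap phi a = kap phi b -> a = b)) as [Kinj|NK].
  2: { exfalso. apply Hlin. apply (caseA hSK phi Hhom Hinj).
       apply NNPP. intros N. apply NK. intros a b E. apply NNPP. intros Nab. apply N.
       exists (a - b)%Z. split. lia. unfold Z.sub. rewrite kap_add, kapN, E; auto. apply mulgV. }
  destruct (proj2_sig (fst (phi 1%Z))) as [l0 Hl0].
  set (dec := fun x y : K => excluded_middle_informative (x = y)).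
  set (l := nodup dec l0).
  assert (lND : NoDup l) by apply NoDup_nodup.
  assert (lsupp : forall v, Lf phi 1 v <> 0%Z -> In v l) by (intros v Hv; apply nodup_In; apply Hl0; auto).
  destruct (D_exists (kap phi) Kinj l l) as [D [HD Dbound]].
  destruct (classic (exists u, In u l /\ Sg phi l u <> 0%Z)) as [[u [Hu HS]]|NS'].
  { exfalso. apply Hlin. eapply (caseB1 hSK phi Hhom Hinj Kinj lND lsupp HD Dbound); eauto. }
  assert (Hsupp := caseB2 phi Hhom l Dbound (fun u Hu => ltac:(apply NNPP; intros N; apply NS'; eauto))).
  destruct (cob_word K hSK (gf phi l) _ Hsupp) as [C0 HC0].
  set (psi := fun a => embK K (kap phi a)).
  assert (hpsi : forall a b, psi (a + b)%Z = gmul G (psi a) (psi b)).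
  { intros a b. apply wr_ext. intros v. reflexivity. unfold psi. simpl. apply kap_add; auto. }
  assert (ipsi : forall a b, psi a = psi b -> a = b).
  { intros a b E. apply Kinj. apply (f_equal snd) in E. exact E. }
  assert (Hrep : forall b k, eval_word G (repeat (b, psi 1%Z) k) = psi (if b then - Z.of_nat k else Z.of_nat k)%Z).
  { intros b k. induction k as [|k IH]. simpl. destruct b; symmetry; apply hom0; auto.
    cbn [repeat]. rewrite eval_cons, IH. destruct b; cbn [lv fst snd].
    - rewrite <- homN, <- hpsi; auto. f_equal. lia.
    - rewrite <- hpsi. f_equal. lia. }
  assert (Gpsi : generates G [psi 1%Z] (img psi)).
  { split.
    - intros t [<-|[]]. exists 1%Z; auto.
    - intros g. split.
      + intros [n <-]. exists (repeat ((n <? 0)%Z, psi 1%Z) (Z.abs_nat n)). split.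
        * intros p Hp. apply repeat_spec in Hp. subst p. left; auto.
        * rewrite Hrep. f_equal. destruct (Z.ltb_spec n 0); lia.
      + intros [w [Ow <-]]. induction w as [|[b y] w IH].
        * exists 0%Z. apply hom0; auto.
        * destruct IH as [n En]. intros p Hp; apply Ow; right; auto.
          assert (Hy : y = psi 1%Z) by (destruct (Ow (b, y) (or_introl eq_refl)) as [E|[]]; simpl in E; auto).
          subst y. rewrite eval_cons, <- En. destruct b; cbn [lv fst snd].
          -- exists (-1 + n)%Z. rewrite hpsi, <- (homN psi hpsi 1). reflexivity.
          -- exists (1 + n)%Z. rewrite hpsi; auto. }
  exists (img psi), [psi 1%Z]. split; [|split; [|split]].
  - exists psi. split; auto. split; auto. intros g. unfold img. tauto.
  - right. intros g [n <-]. exists (kap phi n). reflexivity.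
  - auto.
  - apply (compare hSK hpsi ipsi Hhom Hinj Gpsi HT).
    exists (C0 + 3)%nat. intros a.
    assert (E1 : word_length G S (psi a) = wlK SK (kap phi a)) by (apply wl_embK; auto).
    assert (E2 := wl_lower_K hSK (phi a)).
    assert (E3 : (word_length G S (phi a) <= C0 + 3 * wlK SK (snd (phi a)))%nat).
    { apply HC0. intros v. change (lamp (phi a) v) with (Lf phi a v).
      rewrite (L_formula phi Hhom Hinj Kinj lND lsupp a v). rewrite <- ikap; auto. }
    change (snd (phi a)) with (kap phi a) in *. lia.
Qed.
End Final3.

Theorem theorem1p2 (K : Grp) (SK : list K)
  (hSK : generates K SK (fun _ => True)) :
  (* (1) finitely generated subgroups of W are undistorted *)
  (forall (H : wreath K -> Prop) (T : list (wreath K)),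
      is_subgroup (wreath K) H -> (forall g, H g -> @inW K g) ->
      generates (wreath K) T H ->
      simeq (dist (wreath K) (@wr_gens K SK) H T) (fun n => n)) /\
  (* (2) f.g. subgroups of K: Dist^G_H ~ Dist^K_H *)
  (forall (H : K -> Prop) (T : list K),
      is_subgroup K H -> generates K T H ->
      simeq (dist (wreath K) (@wr_gens K SK) (fun g => exists k, H k /\ g = @embK K k)
                  (map (@embK K) T))
            (dist K SK H T)) /\
  (* (2, in particular) K is undistorted in G *)
  simeq (dist (wreath K) (@wr_gens K SK) (@inK K) (map (@embK K) SK)) (fun n => n) /\
  (* (3) distorted infinite cyclic subgroups *)
  (forall (Hh : wreath K -> Prop) (Th : list (wreath K)),
      iso_Z (wreath K) Hh -> generates (wreath K) Th Hh ->
      ~ simeq (dist (wreath K) (@wr_gens K SK) Hh Th) (fun n => n) ->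
      exists (H : wreath K -> Prop) (T : list (wreath K)),
        iso_Z (wreath K) H /\
        ((forall g, H g -> @inW K g) \/ (forall g, H g -> @inK K g)) /\
        generates (wreath K) T H /\
        simeq (dist (wreath K) (@wr_gens K SK) H T) (dist (wreath K) (@wr_gens K SK) Hh Th)).
Proof.
  split; [|split; [|split]].
  - intros H T Hs HW HT. exact (part1 hSK Hs HW HT).
  - intros H T Hs HT. apply part2; auto.
  - apply part2b; auto.
  - intros Hh Th Hiso HT Hn. apply part3; auto.
Qed.
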